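(* Let $\Gamma$ be a countable group acting on a countable set $X$ by permutations, and let $w:X\to(0,\infty)$ satisfy the boundedness condition. Then the following are equivalent: (i) there exists a $w$-invariant mean on $X$; (ii) there exists a $w$-Følner sequence in $X$.
   Context: The boundedness condition for $w$: for every fixed $g\in\Gamma$ the function $x\mapsto w(gx)/w(x)$ is bounded on $X$. A mean on $X$ is a finitely additive probability measure $\mu$ defined on all subsets of $X$; it extends uniquely to a positive bounded linear functional on $\ell^\infty(X)$, written $F\mapsto\int_X F\,d\mu$. A mean $\mu$ is $w$-invariant if $\mu(gA)=\int_A \frac{w(gx)}{w(x)}\,d\mu(x)$ for all $g\in\Gamma$ and $A\subseteq X$ (equivalently, $\int_X F(gx)\,d\mu(x)=\int_X \frac{w(g^{-1}x)}{w(x)}F(x)\,d\mu(x)$ for all $F\in\ell^\infty(X)$, $g\in\Gamma$). For finite $H\subseteq X$ write $w(H)=\sum_{x\in H}w(x)$. A sequence $(F_n)_{n\ge1}$ of finite nonempty subsets of $X$ is a $w$-Følner sequence if for every $\epsilon>0$ and every finite $L\subset\Gamma$ there is $n_{\epsilon,L}$ such that for all $n\ge n_{\epsilon,L}$ and all $g\in L$: $\frac{w(gF_n\cup F_n)}{w(F_n)}<1+\epsilon$. *)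

(* Defs.v *)
From Stdlib Require Import Reals List Classical ClassicalEpsilon.
Import ListNotations.
Open Scope R_scope.

Definition is_group {G : Type} (mul : G -> G -> G) (inv : G -> G) (e : G) : Prop :=
  (forall a b c, mul a (mul b c) = mul (mul a b) c) /\
  (forall a, mul e a = a) /\ (forall a, mul a e = a) /\
  (forall a, mul (inv a) a = e) /\ (forall a, mul a (inv a) = e).

Definition is_action {G X : Type} (mul : G -> G -> G) (e : G) (act : G -> X -> X) : Prop :=
  (forall x, act e x = x) /\ (forall g h x, act (mul g h) x = act g (act h x)).

Definition countable (T : Type) : Prop :=
  exists f : T -> nat, forall a b, f a = f b -> a = b.

Definition bounded_cond {G X : Type} (act : G -> X -> X) (w : X -> R) : Prop :=
  forall g, exists M, forall x, w (act g x) / w x <= M.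

Definition bounded_fun {X : Type} (F : X -> R) : Prop :=
  exists M, forall x, Rabs (F x) <= M.

Definition indicator {X : Type} (A : X -> Prop) : X -> R :=
  fun x => if excluded_middle_informative (A x) then 1 else 0.

Definition is_mean {X : Type} (mu : (X -> Prop) -> R) : Prop :=
  (forall A B, (forall x, A x <-> B x) -> mu A = mu B) /\
  (forall A, 0 <= mu A) /\
  mu (fun _ => True) = 1 /\
  (forall A B, (forall x, A x -> B x -> False) ->
     mu (fun x => A x \/ B x) = mu A + mu B).

(* I is the (unique) extension of mu to a positive linear functional on l^oo(X):
   F |-> \int_X F dmu. *)
Definition is_integral_of {X : Type} (mu : (X -> Prop) -> R) (I : (X -> R) -> R) : Prop :=
  (forall F H, bounded_fun F -> bounded_fun H -> I (fun x => F x + H x) = I F + I H) /\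
  (forall c F, bounded_fun F -> I (fun x => c * F x) = c * I F) /\
  (forall F, bounded_fun F -> (forall x, 0 <= F x) -> 0 <= I F) /\
  (forall A, I (indicator A) = mu A).

Definition img {G X : Type} (act : G -> X -> X) (g : G) (A : X -> Prop) : X -> Prop :=
  fun x => exists y, A y /\ x = act g y.

Definition w_invariant_mean {G X : Type} (act : G -> X -> X) (w : X -> R)
  (mu : (X -> Prop) -> R) : Prop :=
  is_mean mu /\
  exists I, is_integral_of mu I /\
    forall g A, mu (img act g A) = I (fun x => indicator A x * (w (act g x) / w x)).

Definition set_weight {X : Type} (w : X -> R) (S : X -> Prop) (v : R) : Prop :=
  exists l : list X, NoDup l /\ (forall x, In x l <-> S x) /\
    v = fold_right Rplus 0 (map w l).

(* w-Følner sequence; F n is the finite nonempty set of elements of the list F n *)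
Definition w_folner {G X : Type} (act : G -> X -> X) (w : X -> R) (F : nat -> list X) : Prop :=
  (forall n, F n <> []) /\
  forall eps, 0 < eps -> forall L : list G, exists N, forall n, (N <= n)%nat ->
    forall g, In g L -> forall a b,
      set_weight w (fun x => img act g (fun y => In y (F n)) x \/ In x (F n)) a ->
      set_weight w (fun x => In x (F n)) b ->
      a / b < 1 + eps.

(* Main.v *)
Require Import Defs.
From Stdlib Require Import Reals List Classical ClassicalEpsilon FunctionalExtensionality Lra Permutation Lia Arith.
From mathcomp Require classical_sets filter.
Import ListNotations.
Open Scope R_scope.

Lemma ultra_exists (T : Type) (B : (T -> Prop) -> Prop) :
  B (fun _ => True) ->
  (forall P Q, B P -> B Q -> B (fun x => P x /\ Q x)) ->
  (forall P Q, (forall x, P x -> Q x) -> B P -> B Q) ->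
  ~ B (fun _ => False) ->
  exists U : (T -> Prop) -> Prop,
    (forall P, B P -> U P) /\
    (forall P Q, U P -> U Q -> U (fun x => P x /\ Q x)) /\
    (forall P Q, (forall x, P x -> Q x) -> U P -> U Q) /\
    ~ U (fun _ => False) /\
    (forall P, U P \/ U (fun x => ~ P x)).
Proof.
  intros BT BI BS B0.
  assert (PF : filter.ProperFilter B).
  { constructor. exact B0. constructor. exact BT.
    intros P Q HP HQ. exact (BI P Q HP HQ). exact BS. }
  destruct (filter.ultraFilterLemma PF) as [U [UU sub]].
  exists U. pose proof UU as UU0. destruct UU as [[U0 UF] _].
  destruct UF as [UT UI US].
  split. exact sub.
  split. intros P Q HP HQ. exact (UI P Q HP HQ).
  split. exact US.
  split. exact U0.
  intros P. exact (@filter.in_ultra_setVsetC T U P UU0).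
Qed.

Record ultra (T : Type) (U : (T -> Prop) -> Prop) : Prop := {
  uI : forall P Q, U P -> U Q -> U (fun x => P x /\ Q x);
  uS : forall P Q, (forall x, P x -> Q x) -> U P -> U Q;
  u0 : ~ U (fun _ => False);
  uC : forall P, U P \/ U (fun x => ~ P x) }.

Lemma abs_le_between a b : Rabs a <= b -> -b <= a <= b.
Proof. intros H. pose proof (Rle_abs a). pose proof (Rle_abs (-a)). rewrite Rabs_Ropp in *. lra. Qed.

Definition is_ulim {T} (U : (T -> Prop) -> Prop) (a : T -> R) (L : R) : Prop :=
  forall d, 0 < d -> U (fun t => Rabs (a t - L) < d).

Definition ulim {T} (U : (T -> Prop) -> Prop) (a : T -> R) : R :=
  epsilon (inhabits 0) (fun L => is_ulim U a L).

Definition bnd {T} (a : T -> R) : Prop := exists M, forall t, Rabs (a t) <= M.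

Lemma u_nonempty {T} U (HU : ultra T U) P : U P -> exists t, P t.
Proof.
  intros HP. apply NNPP. intro Hn. apply (u0 _ _ HU).
  apply (uS _ _ HU P). intros x Px. apply Hn. exists x. exact Px. exact HP.
Qed.

Lemma u_T {T} U (HU : ultra T U) : U (fun _ => True).
Proof.
  destruct (uC _ _ HU (fun _ => True)) as [H|H]; auto.
  exfalso. apply (u0 _ _ HU). apply (uS _ _ HU _ _ (fun x Hx => Hx I) H).
Qed.

Lemma u_mono1 {T} U (HU : ultra T U) (P Q : T -> Prop) :
  U P -> (forall t, P t -> Q t) -> U Q.
Proof. intros H1 H2. exact (uS _ _ HU P Q H2 H1). Qed.

Lemma u_mono2 {T} U (HU : ultra T U) (P Q S : T -> Prop) :
  U P -> U Q -> (forall t, P t -> Q t -> S t) -> U S.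
Proof. intros H1 H2 H3. apply (uS _ _ HU _ S (fun t Ht => H3 t (proj1 Ht) (proj2 Ht)) (uI _ _ HU _ _ H1 H2)). Qed.

Lemma is_ulim_unique {T} U (HU : ultra T U) a L1 L2 :
  is_ulim U a L1 -> is_ulim U a L2 -> L1 = L2.
Proof.
  intros H1 H2. apply NNPP. intro Hne.
  set (d := Rabs (L1 - L2) / 2).
  assert (Hd : 0 < d). { unfold d. assert (0 < Rabs (L1 - L2)). apply Rabs_pos_lt. lra. lra. }
  destruct (u_nonempty U HU _ (uI _ _ HU _ _ (H1 d Hd) (H2 d Hd))) as [t [A B]].
  assert (Rabs (L1 - L2) <= Rabs (a t - L1) + Rabs (a t - L2)).
  { replace (L1 - L2) with (-(a t - L1) + (a t - L2)) by ring.
    eapply Rle_trans. apply Rabs_triang. rewrite Rabs_Ropp. lra. }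
  unfold d in *. lra.
Qed.

Lemma is_ulim_exists {T} U (HU : ultra T U) a : bnd a -> exists L, is_ulim U a L.
Proof.
  intros [M HM].
  set (S := fun r => U (fun t => r <= a t)).
  assert (Sb : bound S).
  { exists M. intros r Hr. apply Rnot_lt_le. intro Hlt.
    destruct (u_nonempty U HU _ Hr) as [t Ht]. specialize (HM t).
    apply abs_le_between in HM. lra. }
  assert (Sne : exists r, S r).
  { exists (-M). unfold S. apply (uS _ _ HU (fun _ => True)).
    intros t _. specialize (HM t). apply abs_le_between in HM. lra. apply u_T; auto. }
  destruct (completeness S Sb Sne) as [L [Lub1 Lub2]].
  exists L. intros d Hd.
  assert (E1 : exists r, S r /\ L - d < r).
  { apply NNPP. intro Hn. assert (L <= L - d). apply Lub2. intros r Hr.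
    apply Rnot_lt_le. intro. apply Hn. exists r. split; auto. lra. }
  destruct E1 as [r [Sr Hr]].
  assert (E2 : ~ S (L + d / 2)).
  { intro HS. specialize (Lub1 _ HS). lra. }
  destruct (uC _ _ HU (fun t => L + d/2 <= a t)) as [H|H]. contradiction.
  apply (u_mono2 U HU _ _ _ Sr H). intros t A B. apply Rabs_def1; lra.
Qed.

Lemma ulim_spec {T} U (HU : ultra T U) a : bnd a -> is_ulim U a (ulim U a).
Proof.
  intros Hb. unfold ulim. apply epsilon_spec. apply is_ulim_exists; auto.
Qed.

Lemma ulim_eq {T} U (HU : ultra T U) a L : is_ulim U a L -> ulim U a = L.
Proof.
  intros H. apply (is_ulim_unique U HU a). unfold ulim. apply epsilon_spec. exists L; auto. auto.
Qed.

Lemma bnd_plus {T} (a b : T -> R) : bnd a -> bnd b -> bnd (fun t => a t + b t).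
Proof.
  intros [M1 H1] [M2 H2]. exists (M1 + M2). intro t.
  eapply Rle_trans. apply Rabs_triang. specialize (H1 t); specialize (H2 t); lra.
Qed.

Lemma bnd_scal {T} c (a : T -> R) : bnd a -> bnd (fun t => c * a t).
Proof.
  intros [M H]. exists (Rabs c * M). intro t. rewrite Rabs_mult.
  apply Rmult_le_compat_l. apply Rabs_pos. auto.
Qed.

Lemma ulim_plus {T} U (HU : ultra T U) a b : bnd a -> bnd b ->
  ulim U (fun t => a t + b t) = ulim U a + ulim U b.
Proof.
  intros Ha Hb. apply ulim_eq; auto. intros d Hd.
  pose proof (ulim_spec U HU a Ha (d/2) ltac:(lra)) as A.
  pose proof (ulim_spec U HU b Hb (d/2) ltac:(lra)) as B.
  apply (u_mono2 U HU _ _ _ A B). intros t A1 B1.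
  replace (a t + b t - (ulim U a + ulim U b)) with ((a t - ulim U a) + (b t - ulim U b)) by ring.
  eapply Rle_lt_trans. apply Rabs_triang. lra.
Qed.

Lemma ulim_scal {T} U (HU : ultra T U) c a : bnd a ->
  ulim U (fun t => c * a t) = c * ulim U a.
Proof.
  intros Ha. apply ulim_eq; auto. intros d Hd.
  pose proof (ulim_spec U HU a Ha (d / (Rabs c + 1))) as A.
  assert (0 < Rabs c + 1) by (pose proof (Rabs_pos c); lra).
  specialize (A ltac:(apply Rdiv_lt_0_compat; lra)).
  apply (u_mono1 U HU _ _ A). intros t Ht.
  replace (c * a t - c * ulim U a) with (c * (a t - ulim U a)) by ring.
  rewrite Rabs_mult.
  apply Rle_lt_trans with (Rabs c * (d / (Rabs c + 1))).
  apply Rmult_le_compat_l. apply Rabs_pos. lra.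
  apply Rlt_le_trans with ((Rabs c + 1) * (d / (Rabs c + 1))).
  apply Rmult_lt_compat_r. apply Rdiv_lt_0_compat; lra. lra.
  right. field. lra.
Qed.

Lemma ulim_const {T} U (HU : ultra T U) c : ulim U (fun _ : T => c) = c.
Proof.
  apply ulim_eq; auto. intros d Hd. apply (uS _ _ HU (fun _ => True)).
  intros. rewrite Rminus_diag, Rabs_R0. lra. apply u_T; auto.
Qed.

Lemma ulim_le {T} U (HU : ultra T U) a b : bnd a -> bnd b ->
  U (fun t => a t <= b t) -> ulim U a <= ulim U b.
Proof.
  intros Ha Hb H. apply Rnot_lt_le. intro Hlt.
  set (d := (ulim U a - ulim U b) / 2).
  pose proof (ulim_spec U HU a Ha d ltac:(unfold d; lra)) as A.
  pose proof (ulim_spec U HU b Hb d ltac:(unfold d; lra)) as B.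
  destruct (u_nonempty U HU _ (uI _ _ HU _ _ H (uI _ _ HU _ _ A B))) as [t [H1 [A1 B1]]].
  apply Rabs_def2 in A1. apply Rabs_def2 in B1. unfold d in *. lra.
Qed.

Lemma ulim_ext {T} U (HU : ultra T U) a b : (forall t, a t = b t) -> ulim U a = ulim U b.
Proof.
  intros H. replace a with b. auto. apply functional_extensionality. intros; auto.
Qed.

Definition eqd {A : Type} (x y : A) : {x = y} + {x <> y} := excluded_middle_informative (x = y).

Definition lsum {A} (f : A -> R) (l : list A) : R := fold_right (fun x s => f x + s) 0 l.

Lemma lsum_nil {A} (f : A -> R) : lsum f [] = 0.
Proof. reflexivity. Qed.
Lemma lsum_cons {A} (f : A -> R) x l : lsum f (x :: l) = f x + lsum f l.
Proof. reflexivity. Qed.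

Lemma lsum_app {A} (f : A -> R) l1 l2 : lsum f (l1 ++ l2) = lsum f l1 + lsum f l2.
Proof. induction l1; simpl; [ring| rewrite IHl1; ring]. Qed.

Lemma lsum_ext {A} (f g : A -> R) l : (forall x, In x l -> f x = g x) -> lsum f l = lsum g l.
Proof. induction l; simpl; intros H; auto. rewrite H, IHl; auto. Qed.

Lemma lsum_plus {A} (f g : A -> R) l : lsum (fun x => f x + g x) l = lsum f l + lsum g l.
Proof. induction l; simpl; [ring| rewrite IHl; ring]. Qed.

Lemma lsum_opp {A} (f : A -> R) l : lsum (fun x => - f x) l = - lsum f l.
Proof. induction l; simpl; [ring| rewrite IHl; ring]. Qed.

Lemma lsum_minus {A} (f g : A -> R) l : lsum (fun x => f x - g x) l = lsum f l - lsum g l.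
Proof. induction l; simpl; [ring| rewrite IHl; ring]. Qed.

Lemma lsum_scal {A} c (f : A -> R) l : lsum (fun x => c * f x) l = c * lsum f l.
Proof. induction l; simpl; [ring| rewrite IHl; ring]. Qed.

Lemma lsum_zero {A} (f : A -> R) l : (forall x, In x l -> f x = 0) -> lsum f l = 0.
Proof. induction l; simpl; intros H; auto. rewrite H, IHl; auto. ring. Qed.

Lemma lsum_le {A} (f g : A -> R) l : (forall x, In x l -> f x <= g x) -> lsum f l <= lsum g l.
Proof. induction l; simpl; intros H. lra. pose proof (H a (or_introl eq_refl)).
  pose proof (IHl (fun x Hx => H x (or_intror Hx))). lra. Qed.

Lemma lsum_lt {A} (f g : A -> R) l : (forall x, In x l -> f x <= g x) ->
  (exists x, In x l /\ f x < g x) -> lsum f l < lsum g l.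
Proof. induction l; simpl; intros H [x [Hx Hlt]]. destruct Hx.
  destruct Hx as [<-|Hx].
  - pose proof (lsum_le f g l (fun y Hy => H y (or_intror Hy))). lra.
  - pose proof (H a (or_introl eq_refl)).
    assert (lsum f l < lsum g l) by (apply IHl; eauto). lra. Qed.

Lemma lsum_nonneg {A} (f : A -> R) l : (forall x, In x l -> 0 <= f x) -> 0 <= lsum f l.
Proof. intros H. pose proof (lsum_le (fun _ => 0) f l H). rewrite lsum_zero in H0; auto. Qed.

Lemma lsum_map {A B} (f : B -> R) (g : A -> B) l : lsum f (map g l) = lsum (fun x => f (g x)) l.
Proof. induction l; simpl; auto. rewrite IHl; auto. Qed.

Lemma lsum_perm {A} (f : A -> R) l1 l2 : Permutation l1 l2 -> lsum f l1 = lsum f l2.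
Proof. intros H; induction H; simpl; auto; try lra. Qed.

Lemma lsum_swap {A B} (f : A -> B -> R) l1 l2 :
  lsum (fun x => lsum (fun y => f x y) l2) l1 = lsum (fun y => lsum (fun x => f x y) l1) l2.
Proof.
  induction l1; simpl.
  - rewrite lsum_zero; auto.
  - rewrite IHl1. rewrite <- lsum_plus. auto.
Qed.

Definition nzb (r : R) : bool := if Req_EM_T r 0 then false else true.

Lemma lsum_filter {A} (f : A -> R) l : lsum f l = lsum f (filter (fun x => nzb (f x)) l).
Proof.
  induction l; simpl; auto. unfold nzb at 1. destruct (Req_EM_T (f a) 0); simpl; rewrite IHl; auto. lra.
Qed.

Lemma lsum_supp {A} (f : A -> R) l1 l2 : NoDup l1 -> NoDup l2 ->
  (forall x, f x <> 0 -> In x l1) -> (forall x, f x <> 0 -> In x l2) ->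
  lsum f l1 = lsum f l2.
Proof.
  intros N1 N2 H1 H2. rewrite (lsum_filter f l1), (lsum_filter f l2).
  apply lsum_perm. apply NoDup_Permutation; try apply NoDup_filter; auto.
  intro x. rewrite !filter_In. unfold nzb. destruct (Req_EM_T (f x) 0); split; intros [? ?]; try discriminate; auto.
Qed.

Lemma lsum_indic {A} (f : A -> R) l u : NoDup l -> In u l ->
  lsum (fun t => if eqd t u then f t else 0) l = f u.
Proof.
  induction l; simpl; intros N Hu. destruct Hu.
  inversion N; subst. destruct Hu as [<-|Hu].
  - destruct (eqd a a) as [_|C]; [|congruence].
    rewrite lsum_zero. ring. intros x Hx. destruct (eqd x a); subst; auto. contradiction.
  - destruct (eqd a u). subst; contradiction. rewrite IHl; auto. ring.
Qed.

Lemma lsum_indic_out {A} (f : A -> R) l u : ~ In u l ->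
  lsum (fun t => if eqd t u then f t else 0) l = 0.
Proof.
  intros H. apply lsum_zero. intros x Hx. destruct (eqd x u); subst; auto. contradiction.
Qed.

Lemma lsum_abs {A} (f : A -> R) l : Rabs (lsum f l) <= lsum (fun x => Rabs (f x)) l.
Proof. induction l; simpl. rewrite Rabs_R0; lra. eapply Rle_trans. apply Rabs_triang. lra. Qed.

Definition dedup {A} (l : list A) : list A := nodup eqd l.
Lemma dedup_NoDup {A} (l : list A) : NoDup (dedup l).
Proof. apply NoDup_nodup. Qed.
Lemma dedup_In {A} (l : list A) x : In x (dedup l) <-> In x l.
Proof. apply nodup_In. Qed.

Definition vsum {T} (V : list T) (a x : T -> R) := lsum (fun t => a t * x t) V.

Lemma argmax_list {K} (f : K -> R) (l : list K) : l <> [] ->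
  exists m, In m l /\ forall y, In y l -> f y <= f m.
Proof.
  induction l as [|a l IH]; intros H. congruence.
  destruct l as [|b l'].
  - exists a. split. left; auto. intros y [<-|[]]. lra.
  - destruct IH as [m [Hm Hmax]]. discriminate.
    destruct (Rle_dec (f a) (f m)).
    + exists m. split. right; auto. intros y [<-|Hy]; auto.
    + exists a. split. left; auto. intros y [<-|Hy]. lra. specialize (Hmax y Hy). lra.
Qed.

Lemma argmin_list {K} (f : K -> R) (l : list K) : l <> [] ->
  exists m, In m l /\ forall y, In y l -> f m <= f y.
Proof.
  intros H. destruct (argmax_list (fun k => - f k) l H) as [m [Hm Hx]].
  exists m. split; auto. intros y Hy. specialize (Hx y Hy). lra.
Qed.

Lemma lsum_flat_map {A B} (f : B -> R) (g : A -> list B) l :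
  lsum f (flat_map g l) = lsum (fun x => lsum f (g x)) l.
Proof. induction l; simpl; auto. rewrite lsum_app, IHl. auto. Qed.

Definition posb (r : R) : bool := if Rlt_dec 0 r then true else false.
Definition negb' (r : R) : bool := if Rlt_dec r 0 then true else false.
Definition zerob (r : R) : bool := if Req_EM_T r 0 then true else false.

Definition cert {K T} (V : list T) (a : K -> T -> R) (b : K -> R) (S : list K) (c : list (R * K)) : Prop :=
  (forall p, In p c -> 0 <= fst p /\ In (snd p) S) /\
  (forall t, In t V -> lsum (fun p => fst p * a (snd p) t) c = 0) /\
  lsum (fun p => fst p * b (snd p)) c < 0.

Lemma vsum_upd {T} (V : list T) v (a x : T -> R) r : ~ In v V ->
  vsum (v :: V) a (fun s => if eqd s v then r else x s) = a v * r + vsum V a x.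
Proof.
  intros H. unfold vsum. rewrite lsum_cons. destruct (eqd v v); [|congruence]. f_equal.
  apply lsum_ext. intros y Hy. destruct (eqd y v); subst; auto. contradiction.
Qed.

Theorem FM {T} (V : list T) : NoDup V -> forall (K : Type) (a : K -> T -> R) (b : K -> R) (S : list K),
  (exists x : T -> R, forall k, In k S -> vsum V (a k) x <= b k) \/
  (exists c, cert V a b S c).
Proof.
  induction V as [|v V IH]; intros ND K a b S.
  - destruct (classic (exists k, In k S /\ b k < 0)) as [[k [Hk Hb]]|Hn].
    + right. exists [(1, k)]. split; [|split].
      * intros p [<-|[]]. simpl. split; auto; lra.
      * intros t [].
      * simpl. lra.
    + left. exists (fun _ => 0). intros k Hk. unfold vsum. simpl.
      apply Rnot_lt_le. intro. apply Hn. exists k. auto.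
  - inversion ND as [|? ? Hv ND']; subst.
    set (Pp := filter (fun k => posb (a k v)) S).
    set (Nn := filter (fun k => negb' (a k v)) S).
    set (Z := filter (fun k => zerob (a k v)) S).
    set (a' := fun k' : K + K * K => match k' with inl k => a k | inr (p, n) => fun t => (- a n v) * a p t + a p v * a n t end).
    set (b' := fun k' : K + K * K => match k' with inl k => b k | inr (p, n) => (- a n v) * b p + a p v * b n end).
    set (S' := map inl Z ++ map inr (list_prod Pp Nn)).
    assert (HPp : forall p, In p Pp <-> In p S /\ 0 < a p v).
    { intro p. unfold Pp. rewrite filter_In. unfold posb. destruct (Rlt_dec 0 (a p v)); intuition congruence. }
    assert (HNn : forall p, In p Nn <-> In p S /\ a p v < 0).
    { intro p. unfold Nn. rewrite filter_In. unfold negb'. destruct (Rlt_dec (a p v) 0); intuition congruence. }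
    assert (HZ : forall p, In p Z <-> In p S /\ a p v = 0).
    { intro p. unfold Z. rewrite filter_In. unfold zerob. destruct (Req_EM_T (a p v) 0); intuition congruence. }
    assert (HS' : forall k', In k' S' -> a' k' v = 0).
    { intros k' Hk'. unfold S' in Hk'. apply in_app_or in Hk'. destruct Hk' as [H|H];
      apply in_map_iff in H; destruct H as [k [<- Hk]].
      - simpl. apply HZ in Hk. tauto.
      - destruct k as [p n]. simpl. ring. }
    destruct (IH ND' (K + K * K)%type a' b' S') as [[x Hx]|[c' [Hc1 [Hc2 Hc3]]]].
    + left.
      set (s := fun k => vsum V (a k) x).
      assert (Hpair : forall p n, In p Pp -> In n Nn -> (s n - b n) / (- a n v) <= (b p - s p) / a p v).
      { intros p n Hp Hn. apply HPp in Hp. apply HNn in Hn.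
        assert (Hin : In (inr (p, n)) S'). { unfold S'. apply in_or_app. right. apply in_map. apply in_prod; [apply HPp|apply HNn]; tauto. }
        specialize (Hx _ Hin). simpl in Hx. unfold vsum in Hx.
        rewrite (lsum_ext _ (fun t => (- a n v) * (a p t * x t) + a p v * (a n t * x t))) in Hx by (intros; ring).
        rewrite lsum_plus, !lsum_scal in Hx. fold (vsum V (a p) x) (vsum V (a n) x) in Hx. fold (s p) (s n) in Hx.
        apply (Rmult_le_reg_l (- a n v * a p v)). apply Rmult_lt_0_compat; lra.
        replace (- a n v * a p v * ((s n - b n) / - a n v)) with (a p v * (s n - b n)) by (field; lra).
        replace (- a n v * a p v * ((b p - s p) / a p v)) with (- a n v * (b p - s p)) by (field; lra).
        lra. }
      assert (Ht : exists t, (forall p, In p Pp -> t <= (b p - s p) / a p v) /\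
                             (forall n, In n Nn -> (s n - b n) / (- a n v) <= t)).
      { destruct Nn as [|n0 Nr] eqn:EN.
        - destruct Pp as [|p0 Pr] eqn:EP.
          + exists 0. split; intros ? [].
          + destruct (argmin_list (fun p => (b p - s p) / a p v) (p0 :: Pr)) as [m [Hm Hmin]]. discriminate.
            exists ((b m - s m) / a m v). split; [auto|intros ? []].
        - destruct (argmax_list (fun n => (s n - b n) / (- a n v)) (n0 :: Nr)) as [m [Hm Hmax]]. discriminate.
          exists ((s m - b m) / (- a m v)). split; auto. }
      destruct Ht as [t [Ht1 Ht2]].
      exists (fun y => if eqd y v then t else x y). intros k Hk.
      rewrite vsum_upd by auto. fold (s k).
      destruct (Rlt_dec 0 (a k v)) as [Hpos|Hnp].
      * assert (Hp : In k Pp) by (apply HPp; auto). specialize (Ht1 k Hp).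
        apply (Rmult_le_compat_l (a k v)) in Ht1; [|lra].
        replace (a k v * ((b k - s k) / a k v)) with (b k - s k) in Ht1 by (field; lra). lra.
      * destruct (Rlt_dec (a k v) 0) as [Hneg|Hnn].
        -- assert (Hn : In k Nn) by (apply HNn; auto). specialize (Ht2 k Hn).
           apply (Rmult_le_compat_l (- a k v)) in Ht2; [|lra].
           replace (- a k v * ((s k - b k) / - a k v)) with (s k - b k) in Ht2 by (field; lra). lra.
        -- assert (E : a k v = 0) by lra.
           assert (Hz : In (inl k) S'). { unfold S'. apply in_or_app. left. apply in_map. apply HZ; auto. }
           specialize (Hx _ Hz). simpl in Hx. fold (s k) in Hx. rewrite E. lra.
    + right.
      set (lift := fun (q : R * (K + K * K)) => match q with
                     | (l, inl k) => [(l, k)]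
                     | (l, inr (p, n)) => [(l * (- a n v), p); (l * a p v, n)] end).
      exists (flat_map lift c').
      assert (Hlin : forall (f : K -> R) (f' : K + K * K -> R),
                 (forall k, f' (inl k) = f k) -> (forall p n, f' (inr (p, n)) = (- a n v) * f p + a p v * f n) ->
                 lsum (fun q => fst q * f (snd q)) (flat_map lift c') = lsum (fun q => fst q * f' (snd q)) c').
      { intros f f' E1 E2. rewrite lsum_flat_map. apply lsum_ext. intros [l k'] _.
        destruct k' as [k|[p n]]; simpl. rewrite E1. ring. rewrite E2. ring. }
      split; [|split].
      * intros q Hq. apply in_flat_map in Hq. destruct Hq as [[l k'] [Hin Hq]].
        destruct (Hc1 _ Hin) as [Hl HS]. simpl in Hl, HS.
        unfold S' in HS. apply in_app_or in HS.
        destruct k' as [k|[p n]]; simpl in Hq.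
        -- destruct Hq as [<-|[]]. simpl. split; auto.
           destruct HS as [HS|HS]; apply in_map_iff in HS; destruct HS as [k0 [E Hk0]]; try discriminate.
           injection E as <-. apply HZ in Hk0. tauto.
        -- destruct HS as [HS|HS]; apply in_map_iff in HS; destruct HS as [k0 [E Hk0]]; try discriminate.
           injection E as E; subst k0. apply in_prod_iff in Hk0. destruct Hk0 as [Hp Hn].
           apply HPp in Hp. apply HNn in Hn.
           destruct Hq as [<-|[<-|[]]]; simpl; split; try tauto; apply Rmult_le_pos; lra.
      * intros t Ht. rewrite (Hlin (fun k => a k t) (fun k' => a' k' t)) by (intros; reflexivity).
        destruct Ht as [<-|Ht].
        -- apply lsum_zero. intros q Hq. rewrite HS'. ring. apply (Hc1 q Hq).
        -- apply Hc2; auto.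
      * rewrite (Hlin b b') by (intros; reflexivity). auto.
Qed.

Definition pos (r : R) := Rmax r 0.
Definition ind {X} (S : list X) : X -> R := fun x => if excluded_middle_informative (In x S) then 1 else 0.

Definition PZ {G X} (act : G -> X -> X) (inv : G -> G) (w : X -> R) (L : list G) (Z : list X) (q : X -> R) :=
  lsum (fun g => lsum (fun z => w z * pos (q (act (inv g) z) - q z)) Z) L.
Definition WZ {X} (w : X -> R) (Z : list X) (q : X -> R) := lsum (fun z => w z * q z) Z.

Lemma pos_decomp (m a b a' b' : R) (ia ib : bool) : 0 <= m -> 0 <= a' -> 0 <= b' ->
  (ia = false -> a' = 0) -> (ib = false -> b' = 0) ->
  pos ((if ia then m else 0) + a' - ((if ib then m else 0) + b')) =
  m * pos ((if ia then 1 else 0) - (if ib then 1 else 0)) + pos (a' - b').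
Proof.
  intros Hm Ha Hb Ea Eb. unfold pos.
  destruct ia, ib; try rewrite (Ea eq_refl); try rewrite (Eb eq_refl);
  repeat match goal with |- context [Rmax ?x ?y] =>
    destruct (Rle_dec x y); [rewrite (Rmax_right x y) by lra | rewrite (Rmax_left x y) by lra] end; nra.
Qed.

Lemma namioka {G X} (act : G -> X -> X) (inv : G -> G) (w : X -> R) (L : list G) (Z : list X) (eps : R) :
  (forall x, 0 < w x) -> 0 <= eps ->
  (forall S : list X, incl S Z -> (forall g x, In g L -> In x S -> In (act g x) Z) ->
     eps * WZ w Z (ind S) <= PZ act inv w L Z (ind S)) ->
  forall n (S : list X) (q : X -> R), (length S <= n)%nat ->
  incl S Z -> (forall g x, In g L -> In x S -> In (act g x) Z) ->
  (forall x, 0 <= q x) -> (forall x, q x <> 0 -> In x S) ->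
  eps * WZ w Z q <= PZ act inv w L Z q.
Proof.
  intros Hw He Hset n. induction n as [|n IH]; intros S q Hlen HSZ HgS Hq Hsupp.
  - destruct S; [|simpl in Hlen; lia].
    assert (E : forall x, q x = 0). { intro x. apply NNPP. intro Hn. apply (Hsupp x Hn). }
    unfold WZ, PZ. rewrite lsum_zero. rewrite lsum_zero. lra.
    + intros g _. apply lsum_zero. intros z _. rewrite !E. unfold pos. rewrite Rminus_diag, Rmax_right by lra. ring.
    + intros z _. rewrite E. ring.
  - destruct (classic (exists x, In x S /\ q x = 0)) as [[x0 [Hx0 Eq0]]|Hall].
    + apply (IH (remove eqd x0 S)).
      * pose proof (remove_length_lt eqd S x0 Hx0). lia.
      * intros y Hy. apply in_remove in Hy. apply HSZ. tauto.
      * intros g y Hg Hy. apply in_remove in Hy. apply HgS; tauto.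
      * auto.
      * intros y Hy. apply in_in_remove. intro; subst; contradiction. auto.
    + destruct S as [|s0 S0]. 
      { assert (E : forall x, q x = 0). { intro x. apply NNPP. intro Hn. apply (Hsupp x Hn). }
        unfold WZ, PZ. rewrite lsum_zero. rewrite lsum_zero. lra.
        + intros g _. apply lsum_zero. intros z _. rewrite !E. unfold pos. rewrite Rminus_diag, Rmax_right by lra. ring.
        + intros z _. rewrite E. ring. }
      destruct (argmin_list q (s0 :: S0)) as [xm [Hxm Hmin]]. discriminate.
      set (S := s0 :: S0) in *.
      set (m := q xm).
      assert (Hpos : forall x, In x S -> 0 < q x).
      { intros x Hx. destruct (Hq x); auto. exfalso. apply Hall. exists x. auto. }
      set (q' := fun x => if excluded_middle_informative (In x S) then q x - m else 0).
      assert (Hq' : forall x, 0 <= q' x).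
      { intro x. unfold q'. destruct (excluded_middle_informative (In x S)). specialize (Hmin x i). unfold m. lra. lra. }
      assert (Eq : forall x, q x = m * ind S x + q' x).
      { intro x. unfold q', ind. destruct (excluded_middle_informative (In x S)). ring.
        rewrite Rmult_0_r, Rplus_0_l. apply NNPP. intro Hn. apply n0. apply Hsupp. auto. }
      assert (IHq' : eps * WZ w Z q' <= PZ act inv w L Z q').
      { apply (IH (remove eqd xm S)).
        * pose proof (remove_length_lt eqd S xm Hxm). unfold S in *. simpl in *. lia.
        * intros y Hy. apply in_remove in Hy. apply HSZ. tauto.
        * intros g y Hg Hy. apply in_remove in Hy. apply HgS; tauto.
        * auto.
        * intros y Hy. unfold q' in Hy. destruct (excluded_middle_informative (In y S)); [|congruence].
          apply in_in_remove; auto. intro; subst. apply Hy. unfold m. ring. }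
      assert (HS : eps * WZ w Z (ind S) <= PZ act inv w L Z (ind S)) by (apply Hset; auto).
      assert (EW : WZ w Z q = m * WZ w Z (ind S) + WZ w Z q').
      { unfold WZ. rewrite <- lsum_scal, <- lsum_plus. apply lsum_ext. intros z _. rewrite Eq. ring. }
      assert (EP : PZ act inv w L Z q = m * PZ act inv w L Z (ind S) + PZ act inv w L Z q').
      { unfold PZ. rewrite <- lsum_scal, <- lsum_plus. apply lsum_ext. intros g _.
        rewrite <- lsum_scal, <- lsum_plus. apply lsum_ext. intros z _.
        rewrite !Eq. unfold ind.
        assert (Ha0 : ~ In (act (inv g) z) S -> q' (act (inv g) z) = 0).
        { intro Hn. unfold q'. destruct (excluded_middle_informative _); tauto. }
        assert (Hb0 : ~ In z S -> q' z = 0).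
        { intro Hn. unfold q'. destruct (excluded_middle_informative _); tauto. }
        assert (0 <= m) by (unfold m; pose proof (Hpos xm Hxm); lra).
        assert (K : forall A B : R, A = B -> w z * A = m * (w z * (if excluded_middle_informative (In (act (inv g) z) S) then 1 else 0) * 0 + w z * 0) * 0 + B * w z) by (intros; subst; ring).
        clear K.
        match goal with |- w z * pos ?A = m * (w z * pos ?B) + w z * pos ?C =>
          assert (K : pos A = m * pos B + pos C); [|rewrite K; ring] end.
        destruct (excluded_middle_informative (In (act (inv g) z) S)) as [Ha|Ha];
        destruct (excluded_middle_informative (In z S)) as [Hb|Hb];
        try rewrite (Ha0 Ha); try rewrite (Hb0 Hb);
        pose proof (Hq' (act (inv g) z)); pose proof (Hq' z); unfold pos;
        repeat match goal with |- context [Rmax ?x ?y] =>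
          destruct (Rle_dec x y); [rewrite (Rmax_right x y) by lra | rewrite (Rmax_left x y) by lra] end; nra. }
      rewrite EW, EP.
      assert (0 <= m) by (unfold m; pose proof (Hpos xm Hxm); lra).
      apply Rmult_le_compat_l with (r := m) in HS; auto. nra.
Qed.

Lemma NoDup_prod {A B} (l1 : list A) (l2 : list B) : NoDup l1 -> NoDup l2 -> NoDup (list_prod l1 l2).
Proof.
  induction l1 as [|a l1 IH]; simpl; intros N1 N2. constructor.
  inversion N1; subst. apply NoDup_app; auto.
  - apply NoDup_map_NoDup_ForallPairs; auto. intros x y _ _ E. injection E; auto.
  - intros [x y] G1 G2. apply in_map_iff in G1. destruct G1 as [b [E _]]. injection E as <- <-.
    apply in_prod_iff in G2. tauto.
Qed.

Lemma lsum_prod {A B} (f : A * B -> R) l1 l2 :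
  lsum f (list_prod l1 l2) = lsum (fun a => lsum (fun b => f (a, b)) l2) l1.
Proof. induction l1; simpl; auto. rewrite lsum_app, lsum_map, IHl1. auto. Qed.

Lemma lsum_indic' {A} (f : A -> R) l u : NoDup l -> In u l ->
  lsum (fun t => (if eqd t u then 1 else 0) * f t) l = f u.
Proof.
  intros N H. rewrite <- (lsum_indic f l u N H). apply lsum_ext. intros x _. destruct (eqd x u); ring.
Qed.

Lemma vsum_lin {T K} (V : list T) (a : K -> T -> R) (c : list (R * K)) (x : T -> R) :
  lsum (fun p => fst p * vsum V (a (snd p)) x) c = vsum V (fun t => lsum (fun p => fst p * a (snd p) t) c) x.
Proof.
  unfold vsum. rewrite (lsum_ext _ (fun p => lsum (fun t => fst p * (a (snd p) t * x t)) V)).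
  rewrite lsum_swap. apply lsum_ext. intros t _. rewrite Rmult_comm. rewrite <- lsum_scal.
  apply lsum_ext. intros; ring.
  intros p _. rewrite <- lsum_scal. auto.
Qed.

Definition Psi {G X} (act : G -> X -> X) (w : X -> R) (L : list G) (phi : G -> X -> R) (y : X) : R :=
  lsum (fun g => w (act g y) / w y * phi g (act g y) - phi g y) L.



Lemma LP_finite {G X} (act : G -> X -> X) (inv : G -> G) (w : X -> R) (L : list G) (eps : R)
  (Hw : forall x, 0 < w x) (He : 0 < eps) (NL : NoDup L)
  (Hinv : forall g x, act (inv g) (act g x) = x) (Hinv' : forall g x, act g (act (inv g) x) = x)
  (Hnf : forall S Z : list X, NoDup Z -> incl S Z -> (forall g x, In g L -> In x S -> In (act g x) Z) ->
     eps * WZ w Z (ind S) <= PZ act inv w L Z (ind S))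
  (Y : list X) (NY : NoDup Y) :
  exists phi : G -> X -> R, (forall g x, 0 <= phi g x <= 1) /\
    forall y, In y Y -> eps <= Psi act w L phi y.
Proof.
  set (Z := dedup (Y ++ flat_map (fun g => map (act g) Y) L)).
  assert (NZ : NoDup Z) by apply dedup_NoDup.
  assert (YZ : forall y, In y Y -> In y Z).
  { intros y Hy. apply dedup_In. apply in_or_app. auto. }
  assert (gYZ : forall g y, In g L -> In y Y -> In (act g y) Z).
  { intros g y Hg Hy. apply dedup_In. apply in_or_app. right. apply in_flat_map. exists g. split; auto. apply in_map; auto. }
  set (V := list_prod L Z).
  assert (NV : NoDup V) by (apply NoDup_prod; auto).
  set (K := ((G * X) + (G * X) + X)%type).
  set (c := fun g y => w (act g y) / w y).
  set (a := fun k : K => match k with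
          | inl (inl t) => fun s : G * X => if eqd s t then 1 else 0
          | inl (inr t) => fun s => if eqd s t then -1 else 0
          | inr y => fun s => - ((if eqd (snd s) (act (fst s) y) then 1 else 0) * c (fst s) y) + (if eqd (snd s) y then 1 else 0)
          end).
  set (b := fun k : K => match k with
          | inl (inl _) => 1 | inl (inr _) => 0 | inr _ => - eps end).
  set (S := map (fun t => inl (inl t)) V ++ map (fun t => inl (inr t)) V ++ map inr Y : list K).
  assert (Hval : forall (x : G * X -> R) y, In y Y ->
            vsum V (a (inr y)) x = - lsum (fun g => c g y * x (g, act g y) - x (g, y)) L).
  { intros x y Hy. unfold vsum, V. rewrite lsum_prod. rewrite <- lsum_opp. apply lsum_ext. intros g Hg.
    simpl. rewrite (lsum_ext _ (fun z => - (c g y * ((if eqd z (act g y) then 1 else 0) * x (g, z))) + (if eqd z y then 1 else 0) * x (g, z))).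
    rewrite lsum_plus, lsum_opp, lsum_scal.
    rewrite (lsum_indic' (fun z => x (g, z))), (lsum_indic' (fun z => x (g, z))); auto. ring.
    intros z _. ring. }
  assert (Hbox1 : forall (x : G * X -> R) t, In t V -> vsum V (a (inl (inl t))) x = x t).
  { intros x t Ht. unfold vsum. simpl. apply lsum_indic'; auto. }
  assert (Hbox2 : forall (x : G * X -> R) t, In t V -> vsum V (a (inl (inr t))) x = - x t).
  { intros x t Ht. unfold vsum. simpl. rewrite <- (lsum_indic' x V t NV Ht). rewrite <- lsum_opp.
    apply lsum_ext. intros s _. destruct (eqd s t); ring. }
  assert (HinS : forall k, In k S -> (exists t, In t V /\ (k = inl (inl t) \/ k = inl (inr t))) \/ (exists y, In y Y /\ k = inr y)).
  { intros k Hk. unfold S in Hk. apply in_app_or in Hk. destruct Hk as [Hk|Hk].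
    - apply in_map_iff in Hk. destruct Hk as [t [<- Ht]]. left. exists t. auto.
    - apply in_app_or in Hk. destruct Hk as [Hk|Hk]; apply in_map_iff in Hk; destruct Hk as [t [<- Ht]].
      + left. exists t. auto.
      + right. exists t. auto. }
  destruct (FM V NV K a b S) as [[x Hx]|[cc [Hc1 [Hc2 Hc3]]]].
  - exists (fun g z => Rmax 0 (Rmin 1 (x (g, z)))). split.
    + intros g z. split. apply Rmax_l. apply Rmax_lub. lra. apply Rmin_l.
    + assert (Hphi : forall t, In t V -> Rmax 0 (Rmin 1 (x t)) = x t).
      { intros t Ht. assert (H1 : In (inl (inl t)) S). { unfold S. apply in_or_app. left. apply in_map_iff. exists t. auto. }
        assert (H2 : In (inl (inr t)) S). { unfold S. apply in_or_app. right. apply in_or_app. left. apply in_map_iff. exists t. auto. }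
        pose proof (Hx _ H1) as A1. pose proof (Hx _ H2) as A2. rewrite Hbox1 in A1 by auto. rewrite Hbox2 in A2 by auto.
        simpl in A1, A2. rewrite Rmin_right by lra. rewrite Rmax_right by lra. auto. }
      intros y Hy. assert (H3 : In (inr y) S). { unfold S. apply in_or_app. right. apply in_or_app. right. apply in_map. auto. }
      pose proof (Hx _ H3) as A3. rewrite Hval in A3 by auto. simpl in A3.
      unfold Psi. rewrite (lsum_ext _ (fun g => c g y * x (g, act g y) - x (g, y))). lra.
      intros g Hg. rewrite !Hphi. auto. apply in_prod; auto. apply in_prod; auto.
  - exfalso.
    set (q := fun y => lsum (fun p => match snd p with inr y' => if eqd y' y then fst p / w y else 0 | _ => 0 end) cc).
    assert (Hq : forall y, 0 <= q y).
    { intro y. unfold q. apply lsum_nonneg. intros [l k] Hp. destruct (Hc1 _ Hp) as [Hl _]. simpl in Hl.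
      destruct k as [k|y']. simpl; lra. simpl. destruct (eqd y' y). unfold Rdiv. apply Rmult_le_pos; auto. left. apply Rinv_0_lt_compat; auto. lra. }
    assert (Hqs : forall y, q y <> 0 -> In y Y).
    { intros y Hy. apply NNPP. intro Hn. apply Hy. unfold q. apply lsum_zero. intros [l k] Hp.
      destruct (Hc1 _ Hp) as [_ HS]. simpl in HS. destruct k as [k|y']. auto. simpl.
      destruct (eqd y' y); auto. subst. destruct (HinS _ HS) as [[t [_ [E|E]]]|[y0 [Hy0 E]]]; try discriminate.
      injection E as <-. contradiction. }
    assert (Hgroup : forall F : X -> R,
      lsum (fun p => match snd p with inr y => fst p * F y | _ => 0 end) cc = lsum (fun y => w y * q y * F y) Y).
    { intro F. unfold q.
      rewrite (lsum_ext (fun y => w y * _ * F y) (fun y => lsum (fun p => match snd p with inr y' => (if eqd y y' then 1 else 0) * (fst p * F y) | _ => 0 end) cc)).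
      rewrite lsum_swap. apply lsum_ext. intros [l k] Hp. destruct k as [k|y']. simpl. rewrite lsum_zero; auto.
      simpl. rewrite lsum_indic'. auto. auto. destruct (Hc1 _ Hp) as [_ HS]. simpl in HS.
      destruct (HinS _ HS) as [[t [_ [E|E]]]|[y0 [Hy0 E]]]; try discriminate. injection E as <-. auto.
      intros y Hy. rewrite Rmult_assoc, (Rmult_comm (lsum _ cc)), <- Rmult_assoc. rewrite <- lsum_scal. apply lsum_ext.
      intros [l k] _. destruct k as [k|y']; simpl. ring. destruct (eqd y' y); destruct (eqd y y'); subst; try congruence.
      field. apply Rgt_not_eq, Hw. ring. }
    set (x := fun t : G * X => if Rlt_dec 0 (q (act (inv (fst t)) (snd t)) - q (snd t)) then 1 else 0).
    assert (Hx01 : forall t, 0 <= x t <= 1). { intro t. unfold x. destruct (Rlt_dec _ _); lra. }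
    assert (Hsum0 : lsum (fun p => fst p * vsum V (a (snd p)) x) cc = 0).
    { rewrite vsum_lin. unfold vsum. apply lsum_zero. intros t Ht. rewrite Hc2; auto. ring. }
    set (Psx := fun y => lsum (fun g => c g y * x (g, act g y) - x (g, y)) L).
    assert (Hle : lsum (fun p => fst p * (vsum V (a (snd p)) x - b (snd p))) cc <=
                  lsum (fun p => match snd p with inr y => fst p * (eps - Psx y) | _ => 0 end) cc).
    { apply lsum_le. intros [l k] Hp. destruct (Hc1 _ Hp) as [Hl HS]. simpl in Hl, HS |- *.
      destruct (HinS _ HS) as [[t [Ht [E|E]]]|[y0 [Hy0 E]]]; subst k.
      - rewrite Hbox1 by auto. simpl. pose proof (Hx01 t). nra.
      - rewrite Hbox2 by auto. simpl. pose proof (Hx01 t). nra.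
      - rewrite Hval by auto. simpl. fold (Psx y0). right; ring. }
    assert (Hpos : 0 < lsum (fun p => fst p * (vsum V (a (snd p)) x - b (snd p))) cc).
    { rewrite (lsum_ext _ (fun p => fst p * vsum V (a (snd p)) x + (- (fst p * b (snd p))))) by (intros; ring).
      rewrite lsum_plus, lsum_opp, Hsum0. lra. }
    rewrite (Hgroup (fun y => eps - Psx y)) in Hle.
    rewrite (lsum_ext _ (fun y => eps * (w y * q y) - w y * q y * Psx y)) in Hle by (intros; ring).
    rewrite lsum_minus, lsum_scal in Hle.
    assert (EWq : lsum (fun y => w y * q y) Y = WZ w Z q).
    { unfold WZ. apply lsum_supp; auto. intros y Hy. apply Hqs. intro E; apply Hy; rewrite E; ring.
      intros y Hy. apply YZ, Hqs. intro E; apply Hy; rewrite E; ring. }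
    assert (EP : lsum (fun y => w y * q y * Psx y) Y = PZ act inv w L Z q).
    { unfold Psx, PZ. rewrite (lsum_ext _ (fun y => lsum (fun g => w y * q y * (c g y * x (g, act g y) - x (g, y))) L))
        by (intros; rewrite <- lsum_scal; auto).
      rewrite lsum_swap. apply lsum_ext. intros g Hg.
      rewrite (lsum_ext _ (fun y => q y * w (act g y) * x (g, act g y) - w y * q y * x (g, y))).
      2:{ intros y _. unfold c. field. apply Rgt_not_eq, Hw. }
      rewrite lsum_minus.
      assert (E1 : lsum (fun y => q y * w (act g y) * x (g, act g y)) Y = lsum (fun z => q (act (inv g) z) * w z * x (g, z)) Z).
      { transitivity (lsum (fun z => q (act (inv g) z) * w z * x (g, z)) (map (act g) Y)).
        { rewrite lsum_map. apply lsum_ext. intros y _. rewrite Hinv. auto. }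
        apply lsum_supp; auto.
        - apply NoDup_map_NoDup_ForallPairs; auto. intros y1 y2 _ _ E. rewrite <- (Hinv g y1), <- (Hinv g y2), E. auto.
        - intros z Hz. assert (q (act (inv g) z) <> 0). { intro E; apply Hz; rewrite E; ring. }
          rewrite <- (Hinv' g z). apply in_map. apply Hqs; auto.
        - intros z Hz. assert (q (act (inv g) z) <> 0). { intro E; apply Hz; rewrite E; ring. }
          rewrite <- (Hinv' g z). apply gYZ; auto. }
      assert (E2 : lsum (fun y => w y * q y * x (g, y)) Y = lsum (fun z => w z * q z * x (g, z)) Z).
      { apply lsum_supp; auto. intros y Hy. apply Hqs. intro E; apply Hy; rewrite E; ring.
        intros y Hy. apply YZ, Hqs. intro E; apply Hy; rewrite E; ring. }
      rewrite E1, E2, <- lsum_minus. apply lsum_ext. intros z _. unfold x. simpl. unfold pos.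
      destruct (Rlt_dec 0 (q (act (inv g) z) - q z)).
      rewrite Rmax_left by lra. ring. rewrite Rmax_right by lra. ring. }
    rewrite EWq, EP in Hle.
    assert (HN : eps * WZ w Z q <= PZ act inv w L Z q).
    { apply (namioka act inv w L Z eps Hw ltac:(lra)) with (n := length Y) (S := Y); auto; intros S0 HS0 Hcl; apply Hnf; auto. }
    lra.
Qed.

Definition cnt (n : nat) (t : R) : R := lsum (fun j => if Rle_dec (INR j) t then 1 else 0) (seq 1 n).

Lemma cnt_le_n n t : cnt n t <= INR n.
Proof.
  unfold cnt. induction n. simpl. lra.
  rewrite seq_S, lsum_app, lsum_cons, lsum_nil. change (1 + n)%nat with (S n). rewrite S_INR. destruct (Rle_dec _ t); lra.
Qed.

Lemma cnt_full n t : INR n <= t -> cnt n t = INR n.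
Proof.
  intros H. unfold cnt. induction n. simpl. auto.
  rewrite seq_S, lsum_app, lsum_cons, lsum_nil. change (1 + n)%nat with (S n). rewrite S_INR in *. rewrite IHn by lra.
  destruct (Rle_dec _ t). lra. exfalso. apply n0. lra.
Qed.

Lemma cnt_bounds n t : 0 <= t -> cnt n t <= t /\ (t <= INR n -> t - 1 <= cnt n t).
Proof.
  intros Ht. induction n.
  - unfold cnt. simpl. lra.
  - unfold cnt in *. rewrite seq_S, lsum_app, lsum_cons, lsum_nil. change (1 + n)%nat with (S n). rewrite S_INR in *.
    destruct IHn as [U Lo]. pose proof (cnt_le_n n t) as Cn. unfold cnt in Cn.
    destruct (Rle_dec (INR n + 1) t) as [H|H]; split; try lra.
    + intro. pose proof (cnt_full n t ltac:(lra)) as H1. unfold cnt in H1. lra.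
    + intro. destruct (Rle_dec (INR n) t).
      * pose proof (cnt_full n t r) as H1. unfold cnt in H1. lra.
      * lra.
Qed.

Lemma I_zero {X} (mu : (X -> Prop) -> R) I : is_integral_of mu I -> I (fun _ => 0) = 0.
Proof.
  intros [_ [Hs _]]. replace (fun _ : X => 0) with (fun x : X => 0 * (fun _ : X => 0) x).
  rewrite Hs. ring. exists 0. intros. rewrite Rabs_R0. lra.
  apply functional_extensionality. intros. ring.
Qed.

Lemma bnd0 {X} : bounded_fun (fun _ : X => 0).
Proof. exists 0. intros. rewrite Rabs_R0. lra. Qed.

Lemma bnd_add {X} (F H : X -> R) : bounded_fun F -> bounded_fun H -> bounded_fun (fun x => F x + H x).
Proof.
  intros [M1 H1] [M2 H2]. exists (M1 + M2). intro t.
  eapply Rle_trans. apply Rabs_triang. specialize (H1 t); specialize (H2 t); lra.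
Qed.

Lemma bnd_mul {X} c (F : X -> R) : bounded_fun F -> bounded_fun (fun x => c * F x).
Proof.
  intros [M H]. exists (Rabs c * M). intro t. rewrite Rabs_mult.
  apply Rmult_le_compat_l. apply Rabs_pos. auto.
Qed.

Lemma bnd_lsum {X A} (f : A -> X -> R) l : (forall j, In j l -> bounded_fun (f j)) ->
  bounded_fun (fun x => lsum (fun j => f j x) l).
Proof.
  induction l; intros H. simpl. apply bnd0. simpl. apply bnd_add. apply H; left; auto.
  apply IHl. intros; apply H; right; auto.
Qed.

Lemma I_lsum {X A} (mu : (X -> Prop) -> R) I (HI : is_integral_of mu I) (f : A -> X -> R) l :
  (forall j, In j l -> bounded_fun (f j)) ->
  I (fun x => lsum (fun j => f j x) l) = lsum (fun j => I (f j)) l.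
Proof.
  induction l; intros H. simpl. apply (I_zero mu I HI).
  simpl. destruct HI as [Ha _]. rewrite (Ha (f a) (fun x => lsum (fun j => f j x) l)).
  rewrite IHl. auto. intros; apply H; right; auto. apply H; left; auto.
  apply bnd_lsum. intros; apply H; right; auto.
Qed.

Lemma bnd_ind {X} (A : X -> Prop) : bounded_fun (indicator A).
Proof. exists 1. intro x. unfold indicator. destruct (excluded_middle_informative _); rewrite ?Rabs_R1, ?Rabs_R0; lra. Qed.

Lemma bnd_c {G X} (act : G -> X -> X) (w : X -> R) (Hw : forall x, 0 < w x) (Hwb : bounded_cond act w) g :
  bounded_fun (fun x => w (act g x) / w x).
Proof.
  destruct (Hwb g) as [M HM]. exists M. intro x. rewrite Rabs_pos_eq. auto.
  unfold Rdiv. apply Rmult_le_pos. left; auto. left; apply Rinv_0_lt_compat; auto.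
Qed.

Lemma sum_c_bound {G X} (act : G -> X -> X) (w : X -> R) (Hw : forall x, 0 < w x) (Hwb : bounded_cond act w) (L : list G) :
  exists M, 0 <= M /\ forall x, lsum (fun g => w (act g x) / w x) L <= M.
Proof.
  induction L as [|g L IH]. exists 0. split. lra. intros; simpl; lra.
  destruct IH as [M [HM0 HM]]. destruct (Hwb g) as [Mg HMg].
  exists (Rabs Mg + M). split. pose proof (Rabs_pos Mg); lra. intro x. simpl.
  specialize (HM x). specialize (HMg x). pose proof (Rle_abs Mg). lra.
Qed.

Lemma mean_contra {G X} (act : G -> X -> X) (inv : G -> G) (w : X -> R)
  (Hw : forall x, 0 < w x) (Hinv : forall g x, act (inv g) (act g x) = x) (Hinv' : forall g x, act g (act (inv g) x) = x)
  (Hwb : bounded_cond act w) mu (Hmu : w_invariant_mean act w mu) (L : list G) (eps : R) (He : 0 < eps)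
  (phi : G -> X -> R) (H01 : forall g x, 0 <= phi g x <= 1) (HPsi : forall y, eps <= Psi act w L phi y) : False.
Proof.
  destruct Hmu as [[Hext [Hnn [Htot Hadd]]] [I [HI Hinvar]]].
  pose proof HI as [Iadd [Iscal [Ipos Iind]]].
  destruct (sum_c_bound act w Hw Hwb L) as [M [HM0 HM]].
  destruct (INR_unbounded (2 * M / eps)) as [k Hk].
  assert (Hk0 : (0 < k)%nat). { destruct k. simpl in Hk. exfalso. assert (0 <= 2 * M / eps). unfold Rdiv. apply Rmult_le_pos. lra. left; apply Rinv_0_lt_compat; lra. lra. lia. }
  assert (Hkr : 0 < INR k) by (apply lt_0_INR; auto).
  set (B := fun g j => fun x => INR j / INR k <= phi g x).
  set (pk := fun g x => lsum (fun j => / INR k * indicator (B g j) x) (seq 1 k)).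
  assert (Hpk : forall g x, phi g x - / INR k <= pk g x <= phi g x).
  { intros g x. unfold pk. rewrite lsum_scal.
    assert (E : lsum (fun j => indicator (B g j) x) (seq 1 k) = cnt k (INR k * phi g x)).
    { unfold cnt. apply lsum_ext. intros j _. unfold indicator, B.
      destruct (excluded_middle_informative _) as [h|h]; destruct (Rle_dec _ _) as [h'|h']; auto; exfalso.
      - apply h'. apply (Rmult_le_compat_l (INR k)) in h. replace (INR k * (INR j / INR k)) with (INR j) in h by (field; lra). auto. lra.
      - apply h. apply (Rmult_le_reg_l (INR k)). auto. replace (INR k * (INR j / INR k)) with (INR j) by (field; lra). auto. }
    rewrite E. destruct (H01 g x) as [A1 A2].
    destruct (cnt_bounds k (INR k * phi g x)) as [U Lo]. apply Rmult_le_pos; lra.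
    specialize (Lo ltac:(nra)).
    split.
    - apply (Rmult_le_reg_l (INR k)). auto. replace (INR k * (/ INR k * cnt k (INR k * phi g x))) with (cnt k (INR k * phi g x)) by (field; lra).
      replace (INR k * (phi g x - / INR k)) with (INR k * phi g x - 1) by (field; lra). lra.
    - apply (Rmult_le_reg_l (INR k)). auto. replace (INR k * (/ INR k * cnt k (INR k * phi g x))) with (cnt k (INR k * phi g x)) by (field; lra). lra. }
  assert (Hinvind : forall g (Bs : X -> Prop), I (fun x => w (act g x) / w x * indicator Bs (act g x)) = I (indicator Bs)).
  { intros g Bs. rewrite Iind.
    replace (fun x => w (act g x) / w x * indicator Bs (act g x)) with (fun x => indicator (fun y => Bs (act g y)) x * (w (act g x) / w x)).
    rewrite <- Hinvar. apply Hext. intro z. unfold img. split.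
    - intros [y [Hy ->]]. auto.
    - intros Hz. exists (act (inv g) z). rewrite Hinv'. auto.
    - apply functional_extensionality. intro x. unfold indicator. destruct (excluded_middle_informative _); ring. }
  assert (Hbpk : forall g, bounded_fun (pk g)).
  { intro g. unfold pk. apply bnd_lsum. intros. apply bnd_mul. apply bnd_ind. }
  assert (Bt : forall g F, bounded_fun F -> bounded_fun (fun x => w (act g x) / w x * F (act g x))).
  { intros g F [MF HF]. destruct (bnd_c act w Hw Hwb g) as [Mg HMg]. exists (Mg * MF). intro x.
    rewrite Rabs_mult. apply Rmult_le_compat; try apply Rabs_pos. apply HMg. apply HF. }
  assert (Hinvpk : forall g, I (fun x => w (act g x) / w x * pk g (act g x)) = I (pk g)).
  { intro g.
    replace (fun x => w (act g x) / w x * pk g (act g x))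
      with (fun x => lsum (fun j => (fun j x => / INR k * (w (act g x) / w x * indicator (B g j) (act g x))) j x) (seq 1 k)).
    2:{ apply functional_extensionality. intro x. unfold pk. rewrite <- lsum_scal. apply lsum_ext. intros; ring. }
    rewrite (I_lsum mu I HI (fun j x => / INR k * (w (act g x) / w x * indicator (B g j) (act g x)))).
    2:{ intros; apply bnd_mul, Bt, bnd_ind. }
    unfold pk. rewrite (I_lsum mu I HI (fun j x => / INR k * indicator (B g j) x)).
    2:{ intros; apply bnd_mul, bnd_ind. }
    apply lsum_ext. intros j _. rewrite (Iscal _ (fun x => w (act g x) / w x * indicator (B g j) (act g x))).
    rewrite (Iscal _ (indicator (B g j))). rewrite Hinvind. auto. apply bnd_ind. apply Bt, bnd_ind. }
  set (Pk := fun y => lsum (fun g => w (act g y) / w y * pk g (act g y) - pk g y) L).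
  assert (HPk : forall y, eps / 2 <= Pk y).
  { intro y. specialize (HPsi y). unfold Psi in HPsi. unfold Pk.
    assert (lsum (fun g => w (act g y) / w y * phi g (act g y) - phi g y) L - / INR k * lsum (fun g => w (act g y) / w y) L
             <= lsum (fun g => w (act g y) / w y * pk g (act g y) - pk g y) L).
    { rewrite <- lsum_scal, <- lsum_minus. apply lsum_le. intros g _.
      destruct (Hpk g (act g y)). destruct (Hpk g y).
      assert (0 <= w (act g y) / w y). { unfold Rdiv. apply Rmult_le_pos. left; auto. left; apply Rinv_0_lt_compat; auto. }
      nra. }
    specialize (HM y).
    assert (/ INR k * lsum (fun g => w (act g y) / w y) L <= eps / 2).
    { apply Rle_trans with (/ INR k * M). apply Rmult_le_compat_l. left; apply Rinv_0_lt_compat; auto. auto.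
      apply (Rmult_le_reg_l (INR k)). auto. replace (INR k * (/ INR k * M)) with M by (field; lra).
      apply (Rmult_le_reg_l (2 / eps)). unfold Rdiv; apply Rmult_lt_0_compat; [lra|apply Rinv_0_lt_compat; lra].
      replace (2 / eps * (INR k * (eps / 2))) with (INR k) by (field; lra).
      replace (2 / eps * M) with (2 * M / eps) by (field; lra). lra. }
    lra. }
  assert (Hterm : forall g, bounded_fun (fun y => w (act g y) / w y * pk g (act g y) - pk g y)).
  { intro g. replace (fun y => w (act g y) / w y * pk g (act g y) - pk g y) with (fun y => w (act g y) / w y * pk g (act g y) + (-1) * pk g y).
    apply bnd_add. apply Bt; auto. apply bnd_mul; auto. apply functional_extensionality; intros; ring. }
  assert (HbPk : bounded_fun Pk).
  { unfold Pk. apply (bnd_lsum (fun g y => w (act g y) / w y * pk g (act g y) - pk g y)). intros; auto. }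
  assert (E0 : I Pk = 0).
  { unfold Pk. rewrite (I_lsum mu I HI (fun g y => w (act g y) / w y * pk g (act g y) - pk g y)).
    2:{ intros; auto. }
    apply lsum_zero. intros g _.
    replace (fun y => w (act g y) / w y * pk g (act g y) - pk g y) with (fun y => w (act g y) / w y * pk g (act g y) + (-1) * pk g y).
    2:{ apply functional_extensionality; intros; ring. }
    rewrite Iadd, Iscal, Hinvpk. ring. auto. apply Bt; auto. apply bnd_mul; auto. }
  assert (Ec : I (fun _ => eps / 2) = eps / 2).
  { replace (fun _ : X => eps / 2) with (fun x => eps / 2 * indicator (fun _ : X => True) x).
    rewrite Iscal, Iind, Htot. ring. apply bnd_ind.
    apply functional_extensionality. intro x. unfold indicator. destruct (excluded_middle_informative True). ring. tauto. }
  assert (Hge : 0 <= I (fun x => Pk x + (-1) * (eps / 2))).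
  { apply Ipos. apply bnd_add; auto. apply bnd_mul. exists (Rabs (eps/2)); intros; lra. intros x. specialize (HPk x). lra. }
  rewrite Iadd, Iscal, E0, Ec in Hge. lra. exists (Rabs (eps/2)); intros; lra. auto.
  apply bnd_mul. exists (Rabs (eps/2)); intros; lra.
Qed.

Lemma ulim_lsum {T A} U (HU : ultra T U) (f : A -> T -> R) l : (forall j, bnd (f j)) ->
  ulim U (fun t => lsum (fun j => f j t) l) = lsum (fun j => ulim U (f j)) l.
Proof.
  intros Hb. induction l as [|a l IH]; simpl.
  - apply ulim_const; auto.
  - rewrite (ulim_plus U HU (f a) (fun t => lsum (fun j => f j t) l)); auto. rewrite IH. auto.
    apply (bnd_lsum f l). intros; apply Hb.
Qed.

Lemma ultra_list (X : Type) : exists U, ultra (list X) U /\ forall l : list X, U (fun Y => incl l Y).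
Proof.
  destruct (ultra_exists (list X) (fun P => exists l, forall Y, incl l Y -> P Y)) as [U [H1 [H2 [H3 [H4 H5]]]]].
  - exists []. auto.
  - intros P Q [l1 HP] [l2 HQ]. exists (l1 ++ l2). intros Y HY. split.
    apply HP. intros x Hx. apply HY, in_or_app; auto. apply HQ. intros x Hx. apply HY, in_or_app; auto.
  - intros P Q HPQ [l HP]. exists l. auto.
  - intros [l Hl]. apply (Hl l). intros x; auto.
  - exists U. split. constructor; auto. intros l. apply H1. exists l. auto.
Qed.

Lemma LP_all {G X} (act : G -> X -> X) (inv : G -> G) (w : X -> R) (L : list G) (eps : R)
  (Hw : forall x, 0 < w x) (He : 0 < eps) (NL : NoDup L)
  (Hinv : forall g x, act (inv g) (act g x) = x) (Hinv' : forall g x, act g (act (inv g) x) = x)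
  (Hnf : forall S Z : list X, NoDup Z -> incl S Z -> (forall g x, In g L -> In x S -> In (act g x) Z) ->
     eps * WZ w Z (ind S) <= PZ act inv w L Z (ind S)) :
  exists phi : G -> X -> R, (forall g x, 0 <= phi g x <= 1) /\ forall y, eps <= Psi act w L phi y.
Proof.
  destruct (ultra_list X) as [U [HU HUl]].
  set (spec := fun (Y : list X) (phi : G -> X -> R) => (forall g x, 0 <= phi g x <= 1) /\ forall y, In y (dedup Y) -> eps <= Psi act w L phi y).
  set (phiY := fun Y => epsilon (inhabits (fun (_ : G) (_ : X) => 0)) (spec Y)).
  assert (HphiY : forall Y, spec Y (phiY Y)).
  { intro Y. unfold phiY. apply epsilon_spec. apply (LP_finite act inv w L eps); auto. apply dedup_NoDup. }
  assert (Hb : forall g x, bnd (fun Y => phiY Y g x)).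
  { intros g x. exists 1. intro Y. destruct (HphiY Y) as [H _]. specialize (H g x). rewrite Rabs_pos_eq; lra. }
  exists (fun g x => ulim U (fun Y => phiY Y g x)). split.
  - intros g x. split.
    + rewrite <- (ulim_const U HU 0). apply ulim_le; auto. exists 0. intros; rewrite Rabs_R0; lra.
      apply (u_mono1 U HU _ _ (u_T U HU)). intros Y _. destruct (HphiY Y) as [H _]. apply H.
    + rewrite <- (ulim_const U HU 1). apply ulim_le; auto. exists 1. intros; rewrite Rabs_R1; lra.
      apply (u_mono1 U HU _ _ (u_T U HU)). intros Y _. destruct (HphiY Y) as [H _]. apply H.
  - intro y. unfold Psi.
    transitivity (ulim U (fun Y => Psi act w L (phiY Y) y)).
    + rewrite <- (ulim_const U HU eps). apply ulim_le; auto. exists (Rabs eps). intros; lra.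
      apply (bnd_lsum (fun g Y => w (act g y) / w y * phiY Y g (act g y) - phiY Y g y)).
      intros g _. replace (fun Y => w (act g y) / w y * phiY Y g (act g y) - phiY Y g y)
        with (fun Y => w (act g y) / w y * phiY Y g (act g y) + (-1) * phiY Y g y).
      apply bnd_add; apply bnd_mul; apply Hb. apply functional_extensionality; intros; ring.
      apply (u_mono1 U HU _ _ (HUl [y])). intros Y HY. destruct (HphiY Y) as [_ H]. apply H.
      apply dedup_In. apply HY. left; auto.
    + right. unfold Psi. rewrite (ulim_lsum U HU (fun g Y => w (act g y) / w y * phiY Y g (act g y) - phiY Y g y)).
      apply lsum_ext. intros g _.
      rewrite (ulim_ext U HU _ (fun Y => w (act g y) / w y * phiY Y g (act g y) + (-1) * phiY Y g y)) by (intros; ring).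
      rewrite (ulim_plus U HU), !(ulim_scal U HU); auto. ring. apply bnd_scal; auto. apply bnd_scal; auto.
      intros g. replace (fun Y => w (act g y) / w y * phiY Y g (act g y) - phiY Y g y)
        with (fun Y => w (act g y) / w y * phiY Y g (act g y) + (-1) * phiY Y g y).
      apply bnd_add; apply bnd_mul; apply Hb. apply functional_extensionality; intros; ring.
Qed.

Definition indp {X} (P : X -> Prop) : X -> R := fun x => if excluded_middle_informative (P x) then 1 else 0.

Lemma fold_lsum {X} (w : X -> R) l : fold_right Rplus 0 (map w l) = lsum w l.
Proof. induction l; simpl; auto. rewrite IHl; auto. Qed.

Lemma sw_lsum {X} (w : X -> R) (P : X -> Prop) v (Z : list X) :
  set_weight w P v -> NoDup Z -> (forall x, P x -> In x Z) -> v = lsum (fun z => w z * indp P z) Z.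
Proof.
  intros [l [Nl [Hl Ev]]] NZ HZ. rewrite Ev, fold_lsum.
  transitivity (lsum (fun z => w z * indp P z) l).
  - apply lsum_ext. intros x Hx. unfold indp. destruct (excluded_middle_informative (P x)). ring.
    exfalso. apply n. apply Hl. auto.
  - apply lsum_supp; auto.
    + intros x Hx. apply Hl. unfold indp in Hx. destruct (excluded_middle_informative (P x)); auto. exfalso; apply Hx; ring.
    + intros x Hx. apply HZ. unfold indp in Hx. destruct (excluded_middle_informative (P x)); auto. exfalso; apply Hx; ring.
Qed.

Lemma lsum_term_le {A} (f : A -> R) l a : (forall x, In x l -> 0 <= f x) -> In a l -> f a <= lsum f l.
Proof.
  induction l; simpl; intros H Ha. destruct Ha.
  destruct Ha as [<-|Ha].
  - pose proof (lsum_nonneg f l (fun x Hx => H x (or_intror Hx))). lra.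
  - pose proof (H a0 (or_introl eq_refl)). pose proof (IHl (fun x Hx => H x (or_intror Hx)) Ha). lra.
Qed.

Lemma folner_set {G X} (act : G -> X -> X) (inv : G -> G) (w : X -> R)
  (Hw : forall x, 0 < w x) (Hinv : forall g x, act (inv g) (act g x) = x) (Hinv' : forall g x, act g (act (inv g) x) = x)
  (Hwb : bounded_cond act w) mu (Hmu : w_invariant_mean act w mu) (L : list G) (NL : NoDup L) (eps : R) (He : 0 < eps) :
  exists S : list X, S <> [] /\ forall g, In g L -> forall a b,
      set_weight w (fun x => img act g (fun y => In y S) x \/ In x S) a ->
      set_weight w (fun x => In x S) b -> a / b < 1 + eps.
Proof.
  apply NNPP. intro Hno.
  assert (Hnf : forall S Z : list X, NoDup Z -> incl S Z -> (forall g x, In g L -> In x S -> In (act g x) Z) ->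
     eps * WZ w Z (ind S) <= PZ act inv w L Z (ind S)).
  { intros S Z NZ HSZ Hcl.
    assert (HP0 : 0 <= PZ act inv w L Z (ind S)).
    { unfold PZ. apply lsum_nonneg. intros; apply lsum_nonneg. intros. apply Rmult_le_pos. left; auto. apply Rmax_r. }
    destruct S as [|s0 S0].
    { unfold WZ. rewrite lsum_zero. lra. intros z _. unfold ind. destruct (excluded_middle_informative _) as [[]|]. ring. }
    apply Rnot_lt_le. intro Hlt. apply Hno. exists (s0 :: S0). split. discriminate.
    intros g Hg a b Ha Hb.
    set (S := s0 :: S0) in *.
    assert (Eb : b = WZ w Z (ind S)).
    { rewrite (sw_lsum w _ b Z Hb NZ). unfold WZ. apply lsum_ext. intros z _. unfold indp, ind. auto. auto. }
    assert (Ea : a = WZ w Z (ind S) + lsum (fun z => w z * pos (ind S (act (inv g) z) - ind S z)) Z).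
    { rewrite (sw_lsum w _ a Z Ha NZ). unfold WZ. rewrite <- lsum_plus. apply lsum_ext. intros z _.
      unfold indp, ind, pos. 
      destruct (excluded_middle_informative (In (act (inv g) z) S)) as [h1|h1];
      destruct (excluded_middle_informative (In z S)) as [h2|h2];
      destruct (excluded_middle_informative (img act g (fun y => In y S) z \/ In z S)) as [h3|h3].
      all: try (rewrite Rmax_left by lra; ring); try (rewrite Rmax_right by lra; ring).
      all: try (exfalso; first [ solve [apply h3; left; exists (act (inv g) z); rewrite Hinv'; auto]
                              | solve [apply h3; auto]
                              | solve [destruct h3 as [[y [Hy Ez]]|h3]; [apply h1; rewrite Ez, Hinv; auto | auto]] ]).
      all: try (intros x [[y [Hy ->]]|Hx]; auto).
      all: idtac. }
    assert (Hbpos : 0 < WZ w Z (ind S)).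
    { unfold WZ. apply Rlt_le_trans with (w s0 * ind S s0).
      unfold ind. destruct (excluded_middle_informative _) as [_|h]. rewrite Rmult_1_r; auto. exfalso; apply h; left; auto.
      apply (lsum_term_le (fun z => w z * ind S z)). intros. unfold ind. destruct (excluded_middle_informative _); apply Rmult_le_pos; lra || (left; auto).
      apply HSZ. left; auto. }
    assert (Hterm : lsum (fun z => w z * pos (ind S (act (inv g) z) - ind S z)) Z <= PZ act inv w L Z (ind S)).
    { unfold PZ. apply (lsum_term_le (fun g => lsum (fun z => w z * pos (ind S (act (inv g) z) - ind S z)) Z)); auto.
      intros; apply lsum_nonneg. intros. apply Rmult_le_pos. left; auto. apply Rmax_r. }
    rewrite Ea, Eb. apply (Rmult_lt_reg_r (WZ w Z (ind S))); auto. unfold Rdiv. rewrite Rmult_assoc, Rinv_l by lra. nra. }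
  destruct (LP_all act inv w L eps Hw He NL Hinv Hinv' Hnf) as [phi [H01 HPsi]].
  exact (mean_contra act inv w Hw Hinv Hinv' Hwb mu Hmu L eps He phi H01 HPsi).
Qed.

Lemma sw_exists {X} (w : X -> R) (P : X -> Prop) (Z : list X) : NoDup Z -> (forall x, P x -> In x Z) ->
  set_weight w P (lsum (fun z => w z * indp P z) Z).
Proof.
  intros NZ HZ. set (l := filter (fun x => if excluded_middle_informative (P x) then true else false) Z).
  exists l. split; [|split].
  - apply NoDup_filter; auto.
  - intro x. unfold l. rewrite filter_In. destruct (excluded_middle_informative (P x)) as [p|np].
    + split; intros H. auto. split; auto.
    + split; intros H. destruct H; discriminate. contradiction.
  - rewrite fold_lsum. unfold l. clear l HZ NZ. induction Z as [|z Z IH]; simpl; auto.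
    unfold indp at 1. destruct (excluded_middle_informative (P z)); simpl; rewrite IH; ring.
Qed.

Lemma ind_union {G X} (act : G -> X -> X) (inv : G -> G)
  (Hinv : forall g x, act (inv g) (act g x) = x) (Hinv' : forall g x, act g (act (inv g) x) = x) g (S : list X) z :
  indp (fun x => img act g (fun y => In y S) x \/ In x S) z = ind S z + pos (ind S (act (inv g) z) - ind S z).
Proof.
  unfold indp, ind, pos.
  destruct (excluded_middle_informative (In (act (inv g) z) S)) as [h1|h1];
  destruct (excluded_middle_informative (In z S)) as [h2|h2];
  destruct (excluded_middle_informative (img act g (fun y => In y S) z \/ In z S)) as [h3|h3].
  all: try (rewrite Rmax_left by lra; ring); try (rewrite Rmax_right by lra; ring).
  all: try (exfalso; first [ solve [apply h3; left; exists (act (inv g) z); rewrite Hinv'; auto]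
                          | solve [apply h3; auto]
                          | solve [destruct h3 as [[y [Hy Ez]]|h3]; [apply h1; rewrite Ez, Hinv; auto | auto]] ]).
Qed.

Lemma wpos_list {X} (w : X -> R) (Hw : forall x, 0 < w x) (S Z : list X) : S <> [] -> incl S Z ->
  0 < lsum (fun z => w z * ind S z) Z.
Proof.
  intros HS HSZ. destruct S as [|s0 S0]. congruence.
  apply Rlt_le_trans with (w s0 * ind (s0 :: S0) s0).
  unfold ind. destruct (excluded_middle_informative _) as [_|h]. rewrite Rmult_1_r; auto. exfalso; apply h; left; auto.
  apply (lsum_term_le (fun z => w z * ind (s0 :: S0) z)). intros. unfold ind. destruct (excluded_middle_informative _); apply Rmult_le_pos; lra || (left; auto).
  apply HSZ. left; auto.
Qed.

Lemma folD {G X} (act : G -> X -> X) (inv : G -> G) (w : X -> R) (Hw : forall x, 0 < w x)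
  (Hinv : forall g x, act (inv g) (act g x) = x) (Hinv' : forall g x, act g (act (inv g) x) = x)
  (F : nat -> list X) (HF : w_folner act w F) g eps : 0 < eps ->
  exists N, forall n, (N <= n)%nat -> forall Z, NoDup Z -> incl (F n) Z -> (forall x, In x (F n) -> In (act g x) Z) ->
    lsum (fun z => w z * pos (ind (F n) (act (inv g) z) - ind (F n) z)) Z < eps * lsum (fun z => w z * ind (F n) z) Z.
Proof.
  intros He. destruct HF as [Hne HF]. destruct (HF eps He [g]) as [N HN].
  exists N. intros n Hn Z NZ HFZ HgZ.
  set (b := lsum (fun z => w z * ind (F n) z) Z).
  set (D := lsum (fun z => w z * pos (ind (F n) (act (inv g) z) - ind (F n) z)) Z).
  assert (Hb : set_weight w (fun x => In x (F n)) b).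
  { unfold b. replace (ind (F n)) with (indp (fun x => In x (F n))) by reflexivity. apply sw_exists; auto. }
  assert (Ha : set_weight w (fun x => img act g (fun y => In y (F n)) x \/ In x (F n)) (b + D)).
  { replace (b + D) with (lsum (fun z => w z * indp (fun x => img act g (fun y => In y (F n)) x \/ In x (F n)) z) Z).
    apply sw_exists; auto. intros x [[y [Hy ->]]|Hx]; auto.
    unfold b, D. rewrite <- lsum_plus. apply lsum_ext. intros z _. rewrite (ind_union act inv Hinv Hinv'). ring. }
  specialize (HN n Hn g (or_introl eq_refl) _ _ Ha Hb).
  assert (Hbp : 0 < b) by (apply wpos_list; auto).
  apply (Rmult_lt_compat_r b) in HN; auto. unfold Rdiv in HN. rewrite Rmult_assoc, Rinv_l in HN by lra. lra.
Qed.

Lemma lsum_reindex {X} (f finv : X -> X) (Hfi : forall x, finv (f x) = x) (Hff : forall x, f (finv x) = x)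
  (h : X -> R) (Z Y : list X) : NoDup Z -> NoDup Y -> (forall z, h z <> 0 -> In z Z) ->
  (forall z, h z <> 0 -> In (finv z) Y) -> lsum h Z = lsum (fun y => h (f y)) Y.
Proof.
  intros NZ NY H1 H2. rewrite <- (lsum_map h f). symmetry. apply lsum_supp; auto.
  - apply NoDup_map_NoDup_ForallPairs; auto. intros a b _ _ E. rewrite <- (Hfi a), <- (Hfi b), E. auto.
  - intros z Hz. rewrite <- (Hff z). apply in_map. auto.
Qed.

Lemma indicator_01 {X} (A : X -> Prop) x : 0 <= indicator A x <= 1.
Proof. unfold indicator. destruct (excluded_middle_informative _); lra. Qed.

Lemma mean_from_folner {G X} (act : G -> X -> X) (inv : G -> G) (w : X -> R)
  (Hw : forall x, 0 < w x) (Hinv : forall g x, act (inv g) (act g x) = x) (Hinv' : forall g x, act g (act (inv g) x) = x)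
  (Hwb : bounded_cond act w) (F : nat -> list X) (HF : w_folner act w F) :
  exists mu, w_invariant_mean act w mu.
Proof.
  destruct (ultra_exists nat (fun P => exists N, forall n, (N <= n)%nat -> P n)) as [U [H1 [H2 [H3 [H4 H5]]]]].
  { exists 0%nat. auto. }
  { intros P Q [N1 HP] [N2 HQ]. exists (Nat.max N1 N2). intros n Hn. split; [apply HP|apply HQ]; lia. }
  { intros P Q HPQ [N HP]. exists N. auto. }
  { intros [N HN]. apply (HN N). lia. }
  assert (HU : ultra nat U) by (constructor; auto).
  assert (HUN : forall N, U (fun n => (N <= n)%nat)) by (intros N; apply H1; exists N; auto).
  clear H2 H3 H4 H5.
  pose proof HF as [Hne _].
  set (Fs := fun n => dedup (F n)).
  set (wF := fun n => lsum w (Fs n)).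
  assert (HwF : forall n, wF n = lsum (fun z => w z * ind (F n) z) (Fs n)).
  { intro n. unfold wF. apply lsum_ext. intros x Hx. unfold ind. destruct (excluded_middle_informative _). ring.
    exfalso. apply n0. apply (dedup_In (F n)). auto. }
  assert (HwFp : forall n, 0 < wF n).
  { intro n. rewrite HwF. apply wpos_list; auto. intros x Hx. apply dedup_In; auto. }
  set (In_ := fun n (H : X -> R) => lsum (fun x => H x * w x) (Fs n) / wF n).
  assert (In_bnd : forall H M, (forall x, Rabs (H x) <= M) -> forall n, Rabs (In_ n H) <= M).
  { intros H M HM n. unfold In_. unfold Rdiv. rewrite Rabs_mult. rewrite (Rabs_pos_eq (/ wF n)).
    2:{ left. apply Rinv_0_lt_compat; auto. }
    apply (Rmult_le_reg_r (wF n)); auto. rewrite Rmult_assoc, Rinv_l by (pose proof (HwFp n); lra). rewrite Rmult_1_r.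
    eapply Rle_trans. apply lsum_abs. unfold wF. rewrite <- lsum_scal. apply lsum_le. intros x _.
    rewrite Rabs_mult, (Rabs_pos_eq (w x)) by (left; auto). apply Rmult_le_compat_r. left; auto. auto. }
  assert (In_b : forall H, bounded_fun H -> bnd (fun n => In_ n H)).
  { intros H [M HM]. exists M. apply In_bnd; auto. }
  assert (In_plus : forall H K n, In_ n (fun x => H x + K x) = In_ n H + In_ n K).
  { intros H K n. unfold In_. rewrite (lsum_ext _ (fun x => H x * w x + K x * w x)) by (intros; ring). rewrite lsum_plus. field.
    pose proof (HwFp n); lra. }
  assert (In_scal : forall c H n, In_ n (fun x => c * H x) = c * In_ n H).
  { intros c H n. unfold In_. rewrite (lsum_ext _ (fun x => c * (H x * w x))) by (intros; ring). rewrite lsum_scal. field.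
    pose proof (HwFp n); lra. }
  assert (In_pos : forall H n, (forall x, 0 <= H x) -> 0 <= In_ n H).
  { intros H n Hp. unfold In_. unfold Rdiv. apply Rmult_le_pos. apply lsum_nonneg. intros. apply Rmult_le_pos; auto. left; auto.
    left; apply Rinv_0_lt_compat; auto. }
  set (I := fun H => ulim U (fun n => In_ n H)).
  set (mu := fun A => I (indicator A)).
  assert (bI : forall A : X -> Prop, bounded_fun (indicator A)) by (intros; apply bnd_ind).
  assert (HI : is_integral_of mu I).
  { split; [|split; [|split]].
    - intros H K HH HK. unfold I. rewrite (ulim_ext U HU _ (fun n => In_ n H + In_ n K)) by auto.
      apply ulim_plus; auto.
    - intros c H HH. unfold I. rewrite (ulim_ext U HU _ (fun n => c * In_ n H)) by auto. apply ulim_scal; auto.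
    - intros H HH Hp. unfold I. rewrite <- (ulim_const U HU 0). apply ulim_le; auto. exists 0; intros; rewrite Rabs_R0; lra.
      apply (u_mono1 U HU _ _ (u_T U HU)). intros; auto.
    - intros A. reflexivity. }
  exists mu. split.
  - split; [|split; [|split]].
    + intros A B HAB. unfold mu. f_equal. apply functional_extensionality. intro x. unfold indicator.
      destruct (excluded_middle_informative (A x)), (excluded_middle_informative (B x)); auto; exfalso; firstorder.
    + intros A. unfold mu, I. rewrite <- (ulim_const U HU 0). apply ulim_le; auto. exists 0; intros; rewrite Rabs_R0; lra.
      apply (u_mono1 U HU _ _ (u_T U HU)). intros; apply In_pos. apply indicator_01.
    + unfold mu, I. rewrite <- (ulim_const U HU 1). apply ulim_ext; auto. intro n. unfold In_.
      rewrite (lsum_ext _ w). change (lsum w (Fs n)) with (wF n). field. pose proof (HwFp n); lra.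
      intros x _. unfold indicator. destruct (excluded_middle_informative True). ring. tauto.
    + intros A B Hdisj. unfold mu. replace (indicator (fun x => A x \/ B x)) with (fun x => indicator A x + indicator B x).
      destruct HI as [Ia _]. apply Ia; auto.
      apply functional_extensionality. intro x. unfold indicator.
      destruct (excluded_middle_informative (A x)), (excluded_middle_informative (B x)), (excluded_middle_informative (A x \/ B x));
        try ring; exfalso; firstorder.
  - exists I. split; auto.
    intros g A.
    destruct (Hwb g) as [Mg0 HMg0]. set (Mg := Rabs Mg0).
    assert (HMg : forall x, w (act g x) <= Mg * w x).
    { intro x. specialize (HMg0 x). assert (w (act g x) / w x <= Mg) by (unfold Mg; pose proof (Rle_abs Mg0); lra).
      apply (Rmult_le_compat_r (w x)) in H. unfold Rdiv in H. rewrite Rmult_assoc, Rinv_l in H by (pose proof (Hw x); lra). lra.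
      left; auto. }
    assert (HMg0' : 0 <= Mg) by apply Rabs_pos.
    assert (Hiig : forall z, act (inv (inv g)) z = act g z).
    { intro z. rewrite <- (Hinv g z) at 1. rewrite Hinv. auto. }
    set (a := fun n => In_ n (indicator (img act g A))).
    set (b := fun n => In_ n (fun x => indicator A x * (w (act g x) / w x))).
    assert (Hbb : bounded_fun (fun x => indicator A x * (w (act g x) / w x))).
    { exists Mg. intro x. assert (Hc: 0 <= w (act g x) / w x) by (unfold Rdiv; apply Rmult_le_pos; [left; auto | left; apply Rinv_0_lt_compat; auto]).
      assert (Hc2 : w (act g x)/ w x <= Mg) by (unfold Mg; pose proof (Rle_abs Mg0); pose proof (HMg0 x); lra).
      pose proof (indicator_01 A x). rewrite Rabs_pos_eq by nra. nra. }
    assert (Hab : is_ulim U (fun n => a n + (-1) * b n) 0).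
    { intros d Hd.
      set (eps := d / (2 * (1 + Mg))).
      assert (He : 0 < eps). { unfold eps. apply Rdiv_lt_0_compat; lra. }
      destruct (folD act inv w Hw Hinv Hinv' F HF g eps He) as [N1 HN1].
      destruct (folD act inv w Hw Hinv Hinv' F HF (inv g) eps He) as [N2 HN2].
      apply (u_mono1 U HU _ _ (HUN (Nat.max N1 N2))). intros n Hn.
      set (Z := dedup (F n ++ map (act g) (F n) ++ map (act (inv g)) (F n))).
      assert (NZ : NoDup Z) by apply dedup_NoDup.
      assert (FZ : forall x, In x (F n) -> In x Z). { intros x Hx. apply dedup_In. apply in_or_app; auto. }
      assert (gFZ : forall x, In x (F n) -> In (act g x) Z). { intros x Hx. apply dedup_In. apply in_or_app; right. apply in_or_app; left. apply in_map; auto. }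
      assert (iFZ : forall x, In x (F n) -> In (act (inv g) x) Z). { intros x Hx. apply dedup_In. apply in_or_app; right. apply in_or_app; right. apply in_map; auto. }
      set (W := lsum (fun z => w z * ind (F n) z) Z).
      assert (EW : wF n = W).
      { rewrite HwF. apply lsum_supp; auto. apply dedup_NoDup.
        - intros z Hz. apply dedup_In. unfold ind in Hz. destruct (excluded_middle_informative _); auto. exfalso; apply Hz; ring.
        - intros z Hz. apply FZ. unfold ind in Hz. destruct (excluded_middle_informative _); auto. exfalso; apply Hz; ring. }
      set (D1 := lsum (fun z => w z * pos (ind (F n) (act (inv g) z) - ind (F n) z)) Z).
      set (D2 := lsum (fun z => w z * pos (ind (F n) (act (inv (inv g)) z) - ind (F n) z)) Z).
      assert (HD1 : D1 < eps * W) by (apply HN1; auto; lia).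
      assert (HD2 : D2 < eps * W).
      { apply HN2; auto. lia. }
      assert (Ea : a n * W = lsum (fun z => ind (F n) z * indicator A (act (inv g) z) * w z) Z).
      { unfold a, In_. rewrite <- EW. unfold Rdiv. rewrite Rmult_assoc, Rinv_l, Rmult_1_r by (pose proof (HwFp n); lra).
        transitivity (lsum (fun z => ind (F n) z * indicator A (act (inv g) z) * w z) (Fs n)).
        - apply lsum_ext. intros x Hx. unfold ind. destruct (excluded_middle_informative (In x (F n))) as [_|h].
          2:{ exfalso; apply h; apply (dedup_In (F n)); auto. }
          unfold indicator. destruct (excluded_middle_informative (img act g A x)) as [[y [Hy Ex]]|h1];
            destruct (excluded_middle_informative (A (act (inv g) x))) as [h2|h2]; try ring.
          + exfalso. rewrite Ex, Hinv in h2. auto.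
          + exfalso. apply h1. exists (act (inv g) x). rewrite Hinv'. auto.
        - apply lsum_supp; auto. apply dedup_NoDup.
          + intros z Hz. apply dedup_In. unfold ind in Hz. destruct (excluded_middle_informative _); auto. exfalso; apply Hz; ring.
          + intros z Hz. apply FZ. unfold ind in Hz. destruct (excluded_middle_informative _); auto. exfalso; apply Hz; ring. }
      assert (Eb : b n * W = lsum (fun z => ind (F n) (act (inv g) z) * indicator A (act (inv g) z) * w z) Z).
      { unfold b, In_. rewrite <- EW. unfold Rdiv. rewrite Rmult_assoc, Rinv_l, Rmult_1_r by (pose proof (HwFp n); lra).
        symmetry. rewrite (lsum_reindex (act g) (act (inv g)) (Hinv g) (Hinv' g) _ Z (Fs n) NZ (dedup_NoDup _)).
        - apply lsum_ext. intros x Hx. rewrite Hinv. unfold ind. destruct (excluded_middle_informative (In x (F n))) as [_|h].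
          2:{ exfalso; apply h; apply (dedup_In (F n)); auto. }
          field. pose proof (Hw x); lra.
        - intros z Hz. unfold ind in Hz. destruct (excluded_middle_informative (In (act (inv g) z) (F n))) as [h|h].
          rewrite <- (Hinv' g z). apply gFZ; auto. exfalso; apply Hz; ring.
        - intros z Hz. unfold ind in Hz. destruct (excluded_middle_informative (In (act (inv g) z) (F n))) as [h|h].
          apply dedup_In; auto. exfalso; apply Hz; ring. }
      assert (Hdiff : Rabs (a n * W - b n * W) <= D1 + Mg * D2).
      { rewrite Ea, Eb, <- lsum_minus. eapply Rle_trans. apply lsum_abs.
        eapply Rle_trans with (lsum (fun z => w z * pos (ind (F n) (act (inv g) z) - ind (F n) z) + w z * pos (ind (F n) z - ind (F n) (act (inv g) z))) Z).
        - apply lsum_le. intros z _. pose proof (indicator_01 A (act (inv g) z)). pose proof (Hw z).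
          unfold ind, pos. destruct (excluded_middle_informative (In z (F n))), (excluded_middle_informative (In (act (inv g) z) (F n)));
          repeat match goal with |- context [Rmax ?x ?y] =>
            destruct (Rle_dec x y); [rewrite (Rmax_right x y) by lra | rewrite (Rmax_left x y) by lra] end;
          match goal with |- Rabs ?t <= _ => first [rewrite (Rabs_pos_eq t) by nra | rewrite (Rabs_left1 t) by nra] end; nra.
        - rewrite lsum_plus. fold D1. apply Rplus_le_compat_l.
          rewrite (lsum_reindex (act g) (act (inv g)) (Hinv g) (Hinv' g) _ Z Z NZ NZ).
          + unfold D2. rewrite <- lsum_scal. apply lsum_le. intros y _. rewrite Hinv, Hiig.
            pose proof (HMg y). assert (0 <= pos (ind (F n) (act g y) - ind (F n) y)) by apply Rmax_r. nra.
          + intros z Hz. unfold ind, pos in Hz. destruct (excluded_middle_informative (In z (F n))). auto.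
            exfalso. apply Hz. destruct (excluded_middle_informative _); rewrite Rmax_right by lra; ring.
          + intros z Hz. unfold ind, pos in Hz. destruct (excluded_middle_informative (In z (F n))). auto.
            exfalso. apply Hz. destruct (excluded_middle_informative _); rewrite Rmax_right by lra; ring. }
      assert (HWp : 0 < W) by (rewrite <- EW; auto).
      rewrite Rminus_0_r.
      replace (a n + -1 * b n) with ((a n * W - b n * W) / W) by (field; lra).
      unfold Rdiv. rewrite Rabs_mult, (Rabs_pos_eq (/ W)) by (left; apply Rinv_0_lt_compat; auto).
      apply (Rmult_lt_reg_r W); auto. rewrite Rmult_assoc, Rinv_l, Rmult_1_r by lra.
      apply Rle_lt_trans with (D1 + Mg * D2); auto.
      assert (Mg * D2 <= Mg * (eps * W)) by (apply Rmult_le_compat_l; lra).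
      assert (eps * W + Mg * (eps * W) = d / 2 * W) by (unfold eps; field; lra). nra. }
    assert (Ha : bnd a). { apply In_b. apply bnd_ind. }
    assert (Hb : bnd b). { apply In_b. auto. }
    unfold mu, I. fold a b.
    rewrite (ulim_ext U HU a (fun n => b n + (a n + (-1) * b n))) by (intros; ring).
    rewrite ulim_plus; auto. rewrite (ulim_eq U HU _ 0 Hab). ring.
    apply bnd_plus; auto. apply bnd_scal; auto.
Qed.

Lemma enum_list {G} (f : G -> nat) (Hf : forall a b, f a = f b -> a = b) n :
  exists L : list G, NoDup L /\ forall g, In g L <-> (f g < n)%nat.
Proof.
  induction n as [|n [L [NL HL]]].
  - exists []. split. constructor. intros g; simpl; split; [tauto|lia].
  - destruct (classic (exists g, f g = n)) as [[g0 Hg0]|Hno].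
    + exists (L ++ [g0]). split.
      * apply NoDup_app; auto. repeat constructor; auto. intros a Ha [<-|[]]. apply HL in Ha. lia.
      * intro g. rewrite in_app_iff, HL. simpl. split.
        -- intros [H|[<-|[]]]; lia.
        -- intros H. destruct (Nat.eq_dec (f g) n). right; left. apply Hf. congruence. left; lia.
    + exists L. split; auto. intro g. rewrite HL. split. lia. intros H.
      destruct (Nat.eq_dec (f g) n). exfalso; apply Hno; eauto. lia.
Qed.

Lemma bound_list {G} (f : G -> nat) (L : list G) : exists N, forall g, In g L -> (f g < N)%nat.
Proof.
  induction L as [|a L [N HN]]. exists 0%nat. intros g [].
  exists (Nat.max N (S (f a))). intros g [<-|Hg]. lia. specialize (HN g Hg). lia.
Qed.

Theorem theorem1p1 (G X : Type) (mul : G -> G -> G) (inv : G -> G) (e : G)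
  (act : G -> X -> X) (w : X -> R)
  (HG : is_group mul inv e) (Hact : is_action mul e act)
  (HGc : countable G) (HXc : countable X)
  (Hwpos : forall x, 0 < w x) (Hwb : bounded_cond act w) :
  (exists mu, w_invariant_mean act w mu) <->
  (exists F : nat -> list X, w_folner act w F).
Proof.
  destruct HG as [_ [_ [_ [Hl Hr]]]]. destruct Hact as [He Hm].
  assert (Hinv : forall g x, act (inv g) (act g x) = x).
  { intros g x. rewrite <- Hm, Hl. auto. }
  assert (Hinv' : forall g x, act g (act (inv g) x) = x).
  { intros g x. rewrite <- Hm, Hr. auto. }
  split.
  - intros [mu Hmu]. destruct HGc as [f Hf].
    set (Lf := fun n => epsilon (inhabits []) (fun L : list G => NoDup L /\ forall g, In g L <-> (f g < n)%nat)).
    assert (HLf : forall n, NoDup (Lf n) /\ forall g, In g (Lf n) <-> (f g < n)%nat).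
    { intro n. unfold Lf. apply epsilon_spec. apply enum_list; auto. }
    set (spec := fun n (S : list X) => S <> [] /\ forall g, In g (Lf n) -> forall a b,
      set_weight w (fun x => img act g (fun y => In y S) x \/ In x S) a ->
      set_weight w (fun x => In x S) b -> a / b < 1 + / (INR n + 1)).
    set (Fq := fun n => epsilon (inhabits []) (spec n)).
    assert (HFq : forall n, spec n (Fq n)).
    { intro n. unfold Fq. apply epsilon_spec. apply (folner_set act inv w Hwpos Hinv Hinv' Hwb mu Hmu).
      apply HLf. apply Rinv_0_lt_compat. pose proof (pos_INR n). lra. }
    exists Fq. split.
    + intro n. apply (HFq n).
    + intros eps Heps L.
      destruct (INR_unbounded (/ eps)) as [N1 HN1].
      destruct (bound_list f L) as [N0 HN0].
      exists (Nat.max N0 N1). intros n Hn g Hg a b Ha Hb.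
      destruct (HFq n) as [_ Hs].
      assert (Hgn : In g (Lf n)). { apply HLf. specialize (HN0 g Hg). lia. }
      specialize (Hs g Hgn a b Ha Hb).
      assert (HN1n : INR N1 <= INR n) by (apply le_INR; lia).
      assert (/ (INR n + 1) < eps).
      { pose proof (pos_INR N1). apply (Rmult_lt_reg_l (INR n + 1)). lra.
        rewrite Rinv_r by lra. apply (Rmult_lt_reg_r (/ eps)). apply Rinv_0_lt_compat; auto.
        rewrite Rmult_assoc, Rinv_r, Rmult_1_l, Rmult_1_r by lra. lra. }
      lra.
  - intros [F HF]. apply (mean_from_folner act inv w Hwpos Hinv Hinv' Hwb F HF).
Qed.
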